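(* Let $\nu\geq 1$ and $0<B\leq 2\sqrt{\frac{\pi}{2e}}$, and set $x_0:=\frac{2^{2\nu-1}\pi}{B^2}$. If $z>0$ satisfies both $$2z\;\geq\;\log x_0-\log\log x_0+\frac{e}{e-1}\,\frac{\log\log x_0}{\log x_0} \qquad\text{and}\qquad z\;\geq\;\max\left\{\frac{2}{e}\nu,\ \frac{\nu}{2}+\frac14\right\},$$ then $K_\nu(z)<B$.
   Context: $K_\nu$ denotes the modified Bessel function of the second kind of real order $\nu$, for real argument $z>0$. *)

(* Defs.v *)
From Stdlib Require Export Reals.
From Coquelicot Require Export Coquelicot.
Open Scope R_scope.

(* Modified Bessel function of the second kind, real order nu, argument z > 0,
   via the standard integral representation
     K_nu(z) = \int_0^oo exp(-z cosh t) cosh(nu t) dt   (valid for all real nu, z > 0). *)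
Definition BesselK (nu z : R) : R :=
  RInt_gen (fun t => exp (- z * cosh t) * cosh (nu * t))
           (at_point 0) (Rbar_locally p_infty).

(* Main.v *)
Require Import Defs.
From Stdlib Require Import Reals.
From Coquelicot Require Import Coquelicot.
From Stdlib Require Import Lra Lia Classical Machin.
Open Scope R_scope.

Lemma RInt_gen_le_bound (f : R -> R) (M : R) :
  (forall t, continuous f t) ->
  (forall t, 0 <= t -> 0 <= f t) ->
  (forall b, 0 <= b -> RInt f 0 b <= M) ->
  RInt_gen f (at_point 0) (Rbar_locally p_infty) <= M.
Proof.
  intros Hc Hpos Hb.
  assert (Hex : forall a b, ex_RInt f a b).
  { intros a b; apply (@ex_RInt_continuous R_CompleteNormedModule); intros; apply Hc. }
  set (E := fun y => exists b, 0 <= b /\ y = RInt f 0 b).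
  assert (HE : bound E).
  { exists M; intros y [b [Hb0 ->]]; apply Hb; auto. }
  assert (HE0 : exists y, E y).
  { exists (RInt f 0 0); exists 0; split; [lra|auto]. }
  destruct (completeness E HE HE0) as [l [Hub Hlub]].
  assert (Hmono : forall b1 b2, 0 <= b1 <= b2 -> RInt f 0 b1 <= RInt f 0 b2).
  { intros b1 b2 [H1 H2].
    rewrite <- (RInt_Chasles f 0 b1 b2) by apply Hex.
    assert (0 <= RInt f b1 b2).
    { apply RInt_ge_0; auto. intros x Hx; apply Hpos; lra. }
    simpl; unfold plus; simpl; lra. }
  assert (Hlim : is_RInt_gen f (at_point 0) (Rbar_locally p_infty) l).
  { unfold is_RInt_gen.
    apply (filterlimi_lim_ext (fun ab => RInt f (fst ab) (snd ab))).
    - intros [a b]; simpl; apply (@RInt_correct R_CompleteNormedModule); apply Hex.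
    - apply filterlim_locally. intros eps.
      assert (Hex2 : exists b0, 0 <= b0 /\ l - eps < RInt f 0 b0).
      { destruct (Rle_or_lt l (M + 1)) as [_|_].
        apply NNPP; intro Hn.
        assert (Hup : is_upper_bound E (l - eps)).
        { intros y [b [Hb0 ->]].
          destruct (Rle_or_lt (RInt f 0 b) (l - eps)) as [h|h]; auto.
          exfalso; apply Hn; exists b; split; auto. }
        specialize (Hlub _ Hup). destruct eps as [e He]; simpl in *; lra.
        apply NNPP; intro Hn.
        assert (Hup : is_upper_bound E (l - eps)).
        { intros y [b [Hb0 ->]].
          destruct (Rle_or_lt (RInt f 0 b) (l - eps)) as [h|h]; auto.
          exfalso; apply Hn; exists b; split; auto. }
        specialize (Hlub _ Hup). destruct eps as [e He]; simpl in *; lra. }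
      destruct Hex2 as [b0 [Hb0 Hlt]].
      apply (Filter_prod _ _ _ (fun x => x = 0) (fun y => b0 < y)).
      + reflexivity.
      + exists b0; auto.
      + intros x y -> Hy. simpl.
        assert (Hle : RInt f 0 y <= l).
        { apply Hub; exists y; split; [lra|auto]. }
        assert (Hge : RInt f 0 b0 <= RInt f 0 y) by (apply Hmono; lra).
        change (Rabs (RInt f 0 y - l) < eps).
        destruct eps as [e He]; simpl in *.
        apply Rabs_def1; lra. }
  rewrite (is_RInt_gen_unique f l Hlim).
  apply Hlub. intros y [b [Hb0 ->]]. apply Hb; auto.
Qed.

Lemma cosh_exp t : cosh t = (exp t + / exp t) / 2.
Proof. unfold cosh; rewrite exp_Ropp; reflexivity. Qed.
Lemma sinh_exp t : sinh t = (exp t - / exp t) / 2.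
Proof. unfold sinh; rewrite exp_Ropp; reflexivity. Qed.
Lemma cosh_opp t : cosh (- t) = cosh t.
Proof. unfold cosh; rewrite Ropp_involutive; lra. Qed.
Lemma sinh_opp t : sinh (- t) = - sinh t.
Proof. unfold sinh; rewrite Ropp_involutive; lra. Qed.
Lemma cosh_ge1 t : 1 <= cosh t.
Proof.
  rewrite cosh_exp. assert (h := exp_pos t). set (E := exp t) in *.
  assert (E * / E = 1) by (field; lra). assert (0 < / E) by (apply Rinv_0_lt_compat; lra).
  assert (0 <= (E - 1) * (E - 1) * / E) by (apply Rmult_le_pos; [apply Rle_0_sqr|left; auto]).
  replace ((E - 1) * (E - 1) * / E) with (E - 2 + / E) in H1 by (field; lra). lra.
Qed.
Lemma cosh_sinh2 t : cosh t * cosh t - sinh t * sinh t = 1.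
Proof.
  rewrite cosh_exp, sinh_exp. assert (h := exp_pos t). field. lra.
Qed.
Lemma cosh_pos t : 0 < cosh t.
Proof. generalize (cosh_ge1 t); lra. Qed.
Lemma sinh_le x y : x <= y -> sinh x <= sinh y.
Proof. intros [h|h]. left; apply sinh_lt; auto. subst; lra. Qed.
Lemma cosh_mono x y : 0 <= x <= y -> cosh x <= cosh y.
Proof.
  intros [h1 h2]. rewrite !cosh_exp.
  assert (ex := exp_pos x). assert (ey := exp_pos y).
  assert (1 <= exp x) by (rewrite <- exp_0; destruct h1 as [h1|h1]; [left; apply exp_increasing; auto| subst; lra]).
  assert (exp x <= exp y) by (destruct h2 as [h2|h2]; [left; apply exp_increasing; auto| subst; lra]).
  assert (Hd : (exp y + / exp y) / 2 - (exp x + / exp x) / 2 = (exp y - exp x) * (1 - / (exp x * exp y)) / 2) by (field; lra).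
  assert (exp x * exp y >= 1) by nra.
  assert (/ (exp x * exp y) <= 1).
  { rewrite <- Rinv_1. apply Rinv_le_contravar; lra. }
  assert (0 <= (exp y - exp x) * (1 - / (exp x * exp y))) by (apply Rmult_le_pos; lra).
  lra.
Qed.

Lemma is_derive_cosh t : is_derive cosh t (sinh t).
Proof. unfold cosh, sinh. auto_derive; auto. unfold Rminus, Rdiv. ring. Qed.
Lemma is_derive_sinh t : is_derive sinh t (cosh t).
Proof. unfold cosh, sinh. auto_derive; auto. unfold Rminus, Rdiv. ring. Qed.

Lemma mills (x k b : R) : 0 < b -> 0 <= x -> 3 * b ^ 2 / 4 <= k ->
  1 <= 3 / 2 * (x / (x + b) + k / (x + b) ^ 2).
Proof.
  intros hb hx hk.
  assert (hxb : 0 < x + b) by lra.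
  replace (3 / 2 * (x / (x + b) + k / (x + b) ^ 2)) with
    ((3/2) * (x * (x + b) + k) / (x + b) ^ 2) by (field; lra).
  apply Rcomplements.Rle_div_r. apply pow_lt; lra.
  assert (0 <= (x - b/2)^2) by apply pow2_ge_0. nra.
Qed.
Definition gg (nu z t : R) := z * cosh t - nu * t.
Definition dgg (nu z t : R) := z * sinh t - nu.
Definition GL nu z b t := 3/2 * exp (- gg nu z t) / (b - dgg nu z t).
Definition dGL nu z b t := 3/2 * exp (- gg nu z t) *
   (- dgg nu z t / (b - dgg nu z t) + z * cosh t / (b - dgg nu z t)^2).
Definition GR nu z b t := - (3/2 * exp (- gg nu z t) / (dgg nu z t + b)).
Definition dGR nu z b t := 3/2 * exp (- gg nu z t) *
   (dgg nu z t / (dgg nu z t + b) + z * cosh t / (dgg nu z t + b)^2).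

Lemma GL_deriv nu z b t : b - dgg nu z t <> 0 -> is_derive (GL nu z b) t (dGL nu z b t).
Proof.
  intros H. unfold GL, dGL, gg, dgg in *. unfold cosh, sinh in *. unfold Rminus, Rdiv in *.
  auto_derive. auto. field. intro HH; apply H; lra.
Qed.
Lemma GR_deriv nu z b t : dgg nu z t + b <> 0 -> is_derive (GR nu z b) t (dGR nu z b t).
Proof.
  intros H. unfold GR, dGR, gg, dgg in *. unfold cosh, sinh in *. unfold Rminus, Rdiv in *.
  auto_derive. auto. field. intro HH; apply H; lra.
Qed.
Lemma int_le_deriv (F dF h : R -> R) (x y : R) :
  x <= y ->
  (forall t, x <= t <= y -> is_derive F t (dF t)) ->
  (forall t, x <= t <= y -> h t <= dF t) ->
  (forall t, continuous h t) ->
  RInt h x y <= F y - F x.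
Proof.
  intros Hxy HF Hh Hc.
  assert (Hex : forall a b, ex_RInt h a b).
  { intros a b; apply (@ex_RInt_continuous R_CompleteNormedModule); intros; apply Hc. }
  set (Psi := fun t => F t - RInt h x t).
  assert (HPsi : forall t, x <= t <= y -> is_derive Psi t (dF t - h t)).
  { intros t Ht. unfold Psi.
    apply (@is_derive_minus R_AbsRing R_NormedModule).
    - apply HF; auto.
    - apply (@is_derive_RInt R_CompleteNormedModule h (RInt h x) x t).
      + apply filter_forall. intros b. apply (@RInt_correct R_CompleteNormedModule). apply Hex.
      + apply Hc. }
  destruct (MVT_gen Psi x y (fun t => dF t - h t)) as [c [Hc1 Hc2]].
  - intros t Ht. rewrite Rmin_left in Ht by lra. rewrite Rmax_right in Ht by lra.
    apply HPsi; lra.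
  - intros t Ht. rewrite Rmin_left in Ht by lra. rewrite Rmax_right in Ht by lra.
    apply continuity_pt_filterlim. apply (@ex_derive_continuous R_AbsRing R_NormedModule).
    eexists; apply HPsi; lra.
  - rewrite Rmin_left in Hc1 by lra. rewrite Rmax_right in Hc1 by lra.
    unfold Psi in Hc2. rewrite RInt_point in Hc2.
    assert (0 <= dF c - h c) by (specialize (Hh c Hc1); lra).
    assert (0 <= (dF c - h c) * (y - x)) by (apply Rmult_le_pos; lra).
    unfold zero in Hc2; simpl in Hc2. lra.
Qed.

Definition fK (nu z : R) := fun t => exp (- z * cosh t) * cosh (nu * t).

Lemma fK_cont nu z t : continuous (fK nu z) t.
Proof.
  apply (@ex_derive_continuous R_AbsRing R_NormedModule).
  unfold fK, cosh. auto_derive. auto.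
Qed.

Lemma fK_pos nu z t : 0 <= fK nu z t.
Proof. unfold fK. apply Rmult_le_pos; [left; apply exp_pos| left; apply cosh_pos]. Qed.

Lemma fK_split nu z t : fK nu z t = (exp (- gg nu z t) + exp (- gg nu z (- t))) / 2.
Proof.
  unfold fK, gg. rewrite cosh_opp. unfold cosh at 2.
  replace (- (z * cosh t - nu * t)) with (- z * cosh t + nu * t) by ring.
  replace (- (z * cosh t - nu * - t)) with (- z * cosh t + - (nu * t)) by ring.
  rewrite !exp_plus. lra.
Qed.

Lemma dGL_ge nu z b t : 0 < z -> b = sqrt (4 * z / 3) -> dgg nu z t <= 0 ->
  exp (- gg nu z t) <= dGL nu z b t.
Proof.
  intros hz hb hd.
  assert (hb0 : 0 < b) by (rewrite hb; apply sqrt_lt_R0; lra).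
  assert (hb2 : b ^ 2 = 4 * z / 3) by (rewrite hb; simpl; rewrite Rmult_1_r; apply sqrt_sqrt; lra).
  unfold dGL.
  assert (E := exp_pos (- gg nu z t)).
  assert (M := mills (- dgg nu z t) (z * cosh t) b hb0 ltac:(lra)).
  replace (- dgg nu z t + b) with (b - dgg nu z t) in M by ring.
  assert (1 <= cosh t) by apply cosh_ge1.
  assert (1 <= 3 / 2 * (- dgg nu z t / (b - dgg nu z t) + z * cosh t / (b - dgg nu z t) ^ 2)).
  { apply M. rewrite hb2. nra. }
  nra.
Qed.

Lemma dGR_ge nu z b a t : 0 < z -> b = sqrt (4 * z * cosh a / 3) -> 0 <= a <= t -> 0 <= dgg nu z t ->
  exp (- gg nu z t) <= dGR nu z b t.
Proof.
  intros hz hb ht hd.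
  assert (hca := cosh_ge1 a).
  assert (hb0 : 0 < b) by (rewrite hb; apply sqrt_lt_R0; nra).
  assert (hb2 : b ^ 2 = 4 * z * cosh a / 3) by (rewrite hb; simpl; rewrite Rmult_1_r; apply sqrt_sqrt; nra).
  unfold dGR.
  assert (E := exp_pos (- gg nu z t)).
  assert (M := mills (dgg nu z t) (z * cosh t) b hb0 hd).
  assert (cosh a <= cosh t) by (apply cosh_mono; lra).
  assert (1 <= 3 / 2 * (dgg nu z t / (dgg nu z t + b) + z * cosh t / (dgg nu z t + b) ^ 2)).
  { apply M. rewrite hb2. nra. }
  nra.
Qed.

Lemma GLm_deriv nu z b t : b - dgg nu z (- t) <> 0 ->
  is_derive (fun s => GL nu z b (- s)) t (- dGL nu z b (- t)).
Proof.
  intros H.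
  assert (H1 := GL_deriv nu z b (- t) H).
  assert (H2 : is_derive (fun s : R => - s) t (-1)).
  { auto_derive; auto. }
  assert (H3 := is_derive_comp (GL nu z b) (fun s => - s) t _ _ H1 H2).
  simpl in H3. unfold scal in H3; simpl in H3; unfold mult in H3; simpl in H3.
  replace (- dGL nu z b (- t)) with (-1 * dGL nu z b (- t)) by ring. exact H3.
Qed.

Definition Ubound (nu z : R) :=
  let a := arcsinh (nu / z) in
  3 / 4 * exp (- gg nu z a) * (/ sqrt (4 * z / 3) + / sqrt (4 * z * cosh a / 3)).

Lemma bound_partial nu z b : 0 < nu -> 0 < z -> 0 <= b ->
  RInt (fK nu z) 0 b <= Ubound nu z.
Proof.
  intros hnu hz hb.
  set (a := arcsinh (nu / z)).
  assert (hsa : sinh a = nu / z) by apply sinh_arcsinh.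
  assert (ha0 : 0 < a).
  { unfold a. rewrite <- arcsinh_0. apply arcsinh_lt. apply Rdiv_lt_0_compat; lra. }
  assert (hda : dgg nu z a = 0) by (unfold dgg; rewrite hsa; field; lra).
  assert (hdle : forall t, t <= a -> dgg nu z t <= 0).
  { intros t ht. unfold dgg. assert (sinh t <= sinh a) by (apply sinh_le; auto).
    rewrite hsa in H. apply Rmult_le_compat_l with (r := z) in H; [|lra].
    replace (z * (nu / z)) with nu in H by (field; lra). lra. }
  assert (hdge : forall t, a <= t -> 0 <= dgg nu z t).
  { intros t ht. unfold dgg. assert (sinh a <= sinh t) by (apply sinh_le; auto).
    rewrite hsa in H. apply Rmult_le_compat_l with (r := z) in H; [|lra].
    replace (z * (nu / z)) with nu in H by (field; lra). lra. }
  set (bL := sqrt (4 * z / 3)). set (bR := sqrt (4 * z * cosh a / 3)).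
  assert (hca := cosh_ge1 a).
  assert (hbL : 0 < bL) by (apply sqrt_lt_R0; lra).
  assert (hbR : 0 < bR) by (apply sqrt_lt_R0; nra).
  assert (Hex : forall x y, ex_RInt (fK nu z) x y).
  { intros x y; apply (@ex_RInt_continuous R_CompleteNormedModule); intros; apply fK_cont. }
  set (B' := Rmax a b).
  assert (hB1 : a <= B') by apply Rmax_l. assert (hB2 : b <= B') by apply Rmax_r.
  assert (S1 : RInt (fK nu z) 0 b <= RInt (fK nu z) 0 B').
  { rewrite <- (RInt_Chasles (fK nu z) 0 b B') by apply Hex.
    assert (0 <= RInt (fK nu z) b B') by (apply RInt_ge_0; auto; intros; apply fK_pos).
    simpl; unfold plus; simpl; lra. }
  assert (S2 : RInt (fK nu z) 0 a <=
     (GL nu z bL a - GL nu z bL (- a)) / 2 - (GL nu z bL 0 - GL nu z bL (- 0)) / 2).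
  { apply (int_le_deriv (fun t => (GL nu z bL t - GL nu z bL (- t)) / 2)
                        (fun t => (dGL nu z bL t + dGL nu z bL (- t)) / 2)); [lra| | |apply fK_cont].
    - intros t ht.
      assert (h1 : bL - dgg nu z t <> 0) by (specialize (hdle t ltac:(lra)); lra).
      assert (h2 : bL - dgg nu z (- t) <> 0) by (specialize (hdle (- t) ltac:(lra)); lra).
      assert (D1 := GL_deriv nu z bL t h1).
      assert (D2 := GLm_deriv nu z bL t h2).
      assert (D3 := is_derive_minus _ _ _ _ _ D1 D2).
      assert (D4 := is_derive_scal_l _ _ _ (/ 2) D3).
      simpl in D4. unfold scal, minus, plus, opp, mult in D4; simpl in D4.
      replace ((dGL nu z bL t + dGL nu z bL (- t)) / 2) with ((dGL nu z bL t + - - dGL nu z bL (- t)) * / 2) by (unfold Rdiv; ring).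
      exact D4.
    - intros t ht. rewrite fK_split.
      assert (hbLd : bL = sqrt (4 * z / 3)) by reflexivity.
      assert (H1 := dGL_ge nu z bL t hz hbLd (hdle t ltac:(lra))).
      assert (H2 := dGL_ge nu z bL (- t) hz hbLd (hdle (- t) ltac:(lra))).
      lra. }
  assert (S3 : RInt (fK nu z) a B' <=
     (GR nu z bR B' - GL nu z bL (- B')) / 2 - (GR nu z bR a - GL nu z bL (- a)) / 2).
  { apply (int_le_deriv (fun t => (GR nu z bR t - GL nu z bL (- t)) / 2)
                        (fun t => (dGR nu z bR t + dGL nu z bL (- t)) / 2)); [lra| | |apply fK_cont].
    - intros t ht.
      assert (h1 : dgg nu z t + bR <> 0) by (specialize (hdge t ltac:(lra)); lra).
      assert (h2 : bL - dgg nu z (- t) <> 0) by (specialize (hdle (- t) ltac:(lra)); lra).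
      assert (D1 := GR_deriv nu z bR t h1).
      assert (D2 := GLm_deriv nu z bL t h2).
      assert (D3 := is_derive_minus _ _ _ _ _ D1 D2).
      assert (D4 := is_derive_scal_l _ _ _ (/ 2) D3).
      simpl in D4. unfold scal, minus, plus, opp, mult in D4; simpl in D4.
      replace ((dGR nu z bR t + dGL nu z bL (- t)) / 2) with ((dGR nu z bR t + - - dGL nu z bL (- t)) * / 2) by (unfold Rdiv; ring).
      exact D4.
    - intros t ht. rewrite fK_split.
      assert (hbLd : bL = sqrt (4 * z / 3)) by reflexivity.
      assert (hbRd : bR = sqrt (4 * z * cosh a / 3)) by reflexivity.
      assert (H1 := dGR_ge nu z bR a t hz hbRd ltac:(lra) (hdge t ltac:(lra))).
      assert (H2 := dGL_ge nu z bL (- t) hz hbLd (hdle (- t) ltac:(lra))).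
      lra. }
  assert (S4 : RInt (fK nu z) 0 B' = RInt (fK nu z) 0 a + RInt (fK nu z) a B').
  { rewrite <- (RInt_Chasles (fK nu z) 0 a B') by apply Hex. reflexivity. }
  assert (E1 : GL nu z bL a = 3 / 2 * exp (- gg nu z a) / bL).
  { unfold GL. rewrite hda. f_equal. ring. }
  assert (E2 : GR nu z bR a = - (3 / 2 * exp (- gg nu z a) / bR)).
  { unfold GR. rewrite hda. do 2 f_equal. ring. }
  assert (E3 : GR nu z bR B' <= 0).
  { unfold GR. assert (0 < exp (- gg nu z B')) by apply exp_pos.
    assert (0 < dgg nu z B' + bR) by (specialize (hdge B' hB1); lra).
    assert (0 < 3 / 2 * exp (- gg nu z B') / (dgg nu z B' + bR)) by (apply Rdiv_lt_0_compat; lra).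
    lra. }
  assert (E4 : 0 <= GL nu z bL (- B')).
  { unfold GL. assert (0 < exp (- gg nu z (- B'))) by apply exp_pos.
    assert (0 < bL - dgg nu z (- B')) by (specialize (hdle (- B') ltac:(lra)); lra).
    left; apply Rdiv_lt_0_compat; lra. }
  rewrite Ropp_0 in S2.
  unfold Ubound. fold a. fold bL. fold bR.
  assert (E5 : 3 / 2 * exp (- gg nu z a) / bL + 3 / 2 * exp (- gg nu z a) / bR =
               2 * (3 / 4 * exp (- gg nu z a) * (/ bL + / bR))) by (field; lra).
  lra.
Qed.

Fixpoint coef (n : nat) : R := match n with O => 1 | S m => coef m / INR (S m) end.
Fixpoint P (n : nat) (x : R) : R := match n with O => 1 | S m => P m x + coef n * x ^ n end.

Lemma mono_deriv (phi dphi : R -> R) (x : R) : 0 <= x ->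
  (forall t, 0 <= t <= x -> is_derive phi t (dphi t)) ->
  (forall t, 0 <= t <= x -> 0 <= dphi t) -> phi 0 <= phi x.
Proof.
  intros hx hd hp.
  destruct (MVT_gen phi 0 x dphi) as [c [hc1 hc2]].
  - intros t ht. rewrite Rmin_left in ht by lra. rewrite Rmax_right in ht by lra. apply hd; lra.
  - intros t ht. rewrite Rmin_left in ht by lra. rewrite Rmax_right in ht by lra.
    apply continuity_pt_filterlim. apply (@ex_derive_continuous R_AbsRing R_NormedModule).
    eexists; apply hd; lra.
  - rewrite Rmin_left in hc1 by lra. rewrite Rmax_right in hc1 by lra.
    assert (0 <= dphi c * (x - 0)) by (apply Rmult_le_pos; [apply hp; lra | lra]). lra.
Qed.

Lemma coef_pos n : 0 < coef n.
Proof.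
  induction n. simpl; lra. change (coef (S n)) with (coef n / INR (S n)).
  apply Rdiv_lt_0_compat; auto. apply lt_0_INR; lia.
Qed.

Lemma P_0 n : P n 0 = 1.
Proof. induction n. reflexivity. change (P (S n) 0) with (P n 0 + coef (S n) * 0 ^ (S n)).
  rewrite IHn. rewrite pow_i by lia. ring. Qed.

Lemma P_deriv n x : is_derive (P (S n)) x (P n x).
Proof.
  induction n.
  - change (P 1) with (fun y => 1 + coef 1 * y ^ 1). change (P 0 x) with 1.
    replace (coef 1) with 1 by (simpl; field). auto_derive; auto. ring.
  - change (P (S (S n))) with (fun y => P (S n) y + coef (S (S n)) * y ^ (S (S n))).
    change (P (S n) x) with (P n x + coef (S n) * x ^ (S n)).
    assert (H2 : is_derive (fun y => coef (S (S n)) * y ^ (S (S n))) x (coef (S n) * x ^ S n)).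
    { apply (is_derive_ext (fun y => coef (S (S n)) * y ^ (S (S n)))). intros; reflexivity.
      evar (l : R). replace (coef (S n) * x ^ S n) with l. 
      apply is_derive_scal. apply is_derive_pow. 
      assert (Hid : is_derive (fun y : R => y) x 1) by (auto_derive; auto). exact Hid.
      unfold l. change (coef (S (S n))) with (coef (S n) / INR (S (S n))).
      cbv beta. change (Init.Nat.pred (S (S n))) with (S n).
      field. apply not_0_INR; lia. }
    apply (@is_derive_plus R_AbsRing R_NormedModule _ _ _ _ _ IHn H2).
Qed.

Lemma P_le_exp n x : 0 <= x -> P n x <= exp x.
Proof.
  revert x. induction n; intros x hx.
  - simpl. rewrite <- exp_0. destruct hx as [h|h]; [left; apply exp_increasing; auto | subst; lra].
  - assert (H := mono_deriv (fun t => exp t - P (S n) t) (fun t => exp t - P n t) x hx).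
    cbv beta in H. rewrite P_0, exp_0 in H.
    assert (1 - 1 <= exp x - P (S n) x); [|lra].
    apply H.
    + intros t ht. apply (@is_derive_minus R_AbsRing R_NormedModule).
      apply is_derive_exp. apply P_deriv.
    + intros t ht. specialize (IHn t ltac:(lra)). lra.
Qed.

Lemma P_alt n x : 0 <= x ->
  (Nat.even n = true -> exp (- x) <= P n (- x)) /\
  (Nat.even n = false -> P n (- x) <= exp (- x)).
Proof.
  revert x. induction n; intros x hx.
  - split; intros Hp; [|simpl in Hp; discriminate]. simpl.
    rewrite <- exp_0. destruct hx as [h|h]; [left; apply exp_increasing; lra | subst; rewrite Ropp_0; lra].
  - assert (Hd : forall t, is_derive (fun s => P (S n) (- s)) t (- P n (- t))).
    { intros t. assert (H1 := P_deriv n (- t)).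
      assert (H2 : is_derive (fun s : R => - s) t (-1)) by (auto_derive; auto).
      assert (H3 := is_derive_comp (P (S n)) (fun s => - s) t _ _ H1 H2).
      unfold scal in H3; simpl in H3; unfold mult in H3; simpl in H3.
      replace (- P n (- t)) with (-1 * P n (- t)) by ring. exact H3. }
    assert (Hde : forall t, is_derive (fun s => exp (- s)) t (- exp (- t))).
    { intros t. auto_derive; auto. ring. }
    rewrite PeanoNat.Nat.even_succ. split; intros Hpar.
    +
      assert (Hn : Nat.even n = false).
      { rewrite <- PeanoNat.Nat.negb_odd. rewrite Hpar. reflexivity. }
      assert (H := mono_deriv (fun t => P (S n) (- t) - exp (- t)) (fun t => - P n (- t) + exp (- t)) x hx).
      cbv beta in H. rewrite Ropp_0, P_0, exp_0 in H.
      assert (1 - 1 <= P (S n) (- x) - exp (- x)); [|lra].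
      apply H.
      * intros t ht. assert (D := is_derive_minus _ _ _ _ _ (Hd t) (Hde t)).
        unfold minus, plus, opp in D; simpl in D.
        replace (- P n (- t) + exp (- t)) with (- P n (- t) + - - exp (- t)) by ring. exact D.
      * intros t ht. destruct (IHn t ltac:(lra)) as [_ h]. specialize (h Hn). lra.
    + assert (Hn : Nat.even n = true).
      { rewrite <- PeanoNat.Nat.negb_odd. rewrite Hpar. reflexivity. }
      assert (H := mono_deriv (fun t => exp (- t) - P (S n) (- t)) (fun t => - exp (- t) + P n (- t)) x hx).
      cbv beta in H. rewrite Ropp_0, P_0, exp_0 in H.
      assert (1 - 1 <= exp (- x) - P (S n) (- x)); [|lra].
      apply H.
      * intros t ht. assert (D := is_derive_minus _ _ _ _ _ (Hde t) (Hd t)).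
        unfold minus, plus, opp in D; simpl in D.
        replace (- exp (- t) + P n (- t)) with (- exp (- t) + - - P n (- t)) by ring. exact D.
      * intros t ht. destruct (IHn t ltac:(lra)) as [h _]. specialize (h Hn). lra.
Qed.

Lemma exp_lo x : 0 <= x -> P 13 x <= exp x.
Proof. apply P_le_exp. Qed.
Lemma expm_lo x : 0 <= x -> P 13 (- x) <= exp (- x).
Proof. intros h. destruct (P_alt 13 x h) as [_ H]. apply H. reflexivity. Qed.
Lemma expm_hi x : 0 <= x -> exp (- x) <= P 14 (- x).
Proof. intros h. destruct (P_alt 14 x h) as [H _]. apply H. reflexivity. Qed.

Lemma ln_le_of q r : 0 < q -> 0 <= r -> q <= P 13 r -> ln q <= r.
Proof.
  intros hq hr h. rewrite <- (ln_exp r). destruct (Rle_lt_or_eq_dec q (exp r)) as [h1|h1].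
  - generalize (exp_lo r hr); lra.
  - left; apply ln_increasing; auto.
  - subst; lra.
Qed.

Lemma ln_ge_of q r m : 0 <= r -> 0 < m -> m <= P 13 (- r) -> 1 <= q * m -> r <= ln q.
Proof.
  intros hr hm h hq.
  assert (h1 : m <= exp (- r)) by (generalize (expm_lo r hr); lra).
  assert (h2 : exp r * exp (- r) = 1) by (rewrite <- exp_plus; replace (r + - r) with 0 by ring; apply exp_0).
  assert (hq0 : 0 < q) by (destruct (Rle_or_lt q 0); [nra|auto]).
  assert (h3 : exp r <= q).
  { assert (0 < exp r) by apply exp_pos. assert (0 < exp (- r)) by apply exp_pos. nra. }
  rewrite <- (ln_exp r). destruct h3 as [h3|h3]. left; apply ln_increasing; auto. apply exp_pos.
  rewrite h3; lra.
Qed.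

Lemma sc_bounds x Elo mlo mhi Ehi : 0 <= x -> Elo <= P 13 x -> mlo <= P 13 (- x) ->
  P 14 (- x) <= mhi -> 0 < mlo -> 1 <= Ehi * mlo ->
  (Elo - mhi) / 2 <= sinh x /\ sinh x <= (Ehi - mlo) / 2 /\ (Elo + mlo) / 2 <= cosh x.
Proof.
  intros hx h1 h2 h3 hm h4.
  assert (e1 := exp_lo x hx). assert (e2 := expm_lo x hx). assert (e3 := expm_hi x hx).
  assert (h5 : exp x * exp (- x) = 1) by (rewrite <- exp_plus; replace (x + - x) with 0 by ring; apply exp_0).
  assert (exp x <= Ehi).
  { assert (0 < exp x) by apply exp_pos. nra. }
  unfold sinh, cosh. repeat split; lra.
Qed.

Lemma iv_chi (nu z a S C l2 Ac be Shi Clo l2lo A' : R) :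
  1 <= nu -> 0 < z -> nu = z * S -> 0 < S -> S <= Shi -> a <= be -> l2lo <= l2 ->
  Clo <= C -> 1 <= Clo -> Ac <= A' ->
  2 * (be - l2lo) - 2 * (Clo - 1) / Shi <= 0 ->
  2 * (be - l2lo) - 2 * (Clo - 1) / Shi + A' < 0 ->
  2 * nu * (a - l2) - 2 * z * (C - 1) + Ac < 0.
Proof.
  intros hnu hz hS hS0 hSh ha hl hC hC1 hA hX hXA.
  assert (hShi : 0 < Shi) by lra.
  assert (h1 : 2 * nu * (a - l2) <= 2 * nu * (be - l2lo)) by nra.
  assert (hzS : nu / Shi <= z).
  { apply Rcomplements.Rle_div_l; auto. nra. }
  assert (h2 : 2 * (nu / Shi) * (Clo - 1) <= 2 * z * (C - 1)) by nra.
  assert (h3 : nu * (2 * (be - l2lo) - 2 * (Clo - 1) / Shi) <= 2 * (be - l2lo) - 2 * (Clo - 1) / Shi) by nra.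
  assert (h4 : 2 * nu * (be - l2lo) - 2 * (nu / Shi) * (Clo - 1) = nu * (2 * (be - l2lo) - 2 * (Clo - 1) / Shi)) by (field; lra).
  lra.
Qed.

Lemma iv_lin_neg (nu z a S C l2 Ac be Slo Clo l2lo A' : R) :
  0 < z -> nu = z * S -> 0 <= Slo <= S -> a <= be -> be <= l2lo -> l2lo <= l2 ->
  Clo <= C -> Ac <= A' ->
  2 * nu * (a - l2) - 2 * z * (C - 1) + Ac <= z * (2 * Slo * (be - l2lo) - 2 * (Clo - 1)) + A'.
Proof.
  intros hz hS hSl ha hb hl hC hA. subst nu.
  assert (S * (a - l2) <= S * (be - l2lo)) by nra.
  assert (S * (be - l2lo) <= Slo * (be - l2lo)) by nra.
  assert (z * (S * (a - l2)) <= z * (Slo * (be - l2lo))) by nra.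
  nra.
Qed.

Lemma iv_lin_pos (nu z a S C l2 Ac be Shi Clo l2lo A' : R) :
  0 < z -> nu = z * S -> 0 <= S <= Shi -> a <= be -> 0 <= be - l2lo -> l2lo <= l2 ->
  Clo <= C -> Ac <= A' ->
  2 * nu * (a - l2) - 2 * z * (C - 1) + Ac <= z * (2 * Shi * (be - l2lo) - 2 * (Clo - 1)) + A'.
Proof.
  intros hz hS hSl ha hb hl hC hA. subst nu.
  assert (S * (a - l2) <= S * (be - l2lo)) by nra.
  assert (S * (be - l2lo) <= Shi * (be - l2lo)) by nra.
  assert (z * (S * (a - l2)) <= z * (Shi * (be - l2lo))) by nra.
  nra.
Qed.

Lemma lin_fin1 (D z Psi A' zi : R) :
  D <= z * Psi + A' -> zi <= z -> Psi <= 0 -> zi <= 27/10 ->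
  zi * (Psi + 1/5) + A' - 54/100 < 0 -> 27/10 * Psi + A' < 0 ->
  D < 0 \/ D < 54/100 - 1/5 * z.
Proof.
  intros hD hz hP hzi h1 h2.
  destruct (Rle_or_lt z (27/10)) as [hz2|hz2].
  - right. destruct (Rle_or_lt (Psi + 1/5) 0) as [hs|hs]; nra.
  - left. nra.
Qed.

Lemma lin_fin2 (D z Psi A' zi : R) :
  D <= z * Psi + A' -> zi <= z -> Psi <= 0 -> zi * Psi + A' < 0 -> D < 0 \/ D < 54/100 - 1/5 * z.
Proof. intros hD hz hP h. left. nra. Qed.

Lemma zlb1 (nu z S Shi zi : R) : 1 <= nu -> nu = z * S -> S <= Shi -> 0 < z -> zi * Shi <= 1 -> 0 < Shi -> zi <= z.
Proof. intros. subst. nra. Qed.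

Lemma zlb2 (nu z S Slo zi : R) : nu / 2 + 1/4 <= z -> nu = z * S -> Slo <= S -> 0 < z ->
  zi * (4 - 2 * Slo) <= 1 -> 0 < 4 - 2 * Slo -> zi <= z.
Proof. intros. subst. nra. Qed.

Lemma Acoef_bound (C Clo r lam : R) : 1 <= Clo -> Clo <= C -> 0 <= r -> 1 <= r * r * Clo -> 0 <= lam ->
  1 + r <= P 13 lam -> ln (1 + / sqrt C) <= lam.
Proof.
  intros h1 h2 hr hrr hl hP.
  assert (hsC : 0 < sqrt C) by (apply sqrt_lt_R0; lra).
  assert (hs2 : sqrt C * sqrt C = C) by (apply sqrt_sqrt; lra).
  assert (hinv : / sqrt C <= r).
  { assert (r * sqrt C >= 1).
    { assert (r * r * C >= 1) by nra.
      assert ((r * sqrt C) * (r * sqrt C) >= 1) by nra.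
      assert (0 <= r * sqrt C) by nra. nra. }
    assert (hi : / sqrt C * sqrt C = 1) by (field; lra).
    assert (0 < / sqrt C) by (apply Rinv_0_lt_compat; auto).
    nra. }
  apply ln_le_of; auto.
  assert (0 < / sqrt C) by (apply Rinv_0_lt_compat; auto). lra.
  lra.
Qed.
Lemma PI_lo : 314159/100000 <= PI.
Proof.
  destruct (PI_2_3_7_ineq 2) as [H _].
  unfold tg_alt, PI_2_3_7_tg, Ratan_seq in H. simpl in H. lra.
Qed.
Lemma gp_1 : (63153/250000) <= sinh (1/4) /\ sinh (1/4) <= (126307/500000) /\ (257853/250000) <= cosh (1/4).
Proof.
  destruct (sc_bounds (1/4) (51361/40000) (1947/2500) (778801/1000000) (1284027/1000000)) as [h1 [h2 h3]];
    [lra | (cbv [P coef]; simpl INR; lra) | (cbv [P coef]; simpl INR; lra) | (cbv [P coef]; simpl INR; lra) | lra | lra | ].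
  repeat split; lra.
Qed.

Lemma gp_2 : (366547/1000000) <= sinh (897/2500) /\ sinh (897/2500) <= (366549/1000000) /\ (532531/500000) <= cosh (897/2500).
Proof.
  destruct (sc_bounds (897/2500) (143161/100000) (349257/500000) (139703/200000) (1431611/1000000)) as [h1 [h2 h3]];
    [lra | (cbv [P coef]; simpl INR; lra) | (cbv [P coef]; simpl INR; lra) | (cbv [P coef]; simpl INR; lra) | lra | lra | ].
  repeat split; lra.
Qed.

Lemma gp_3 : (212529/500000) <= sinh (1033/2500) /\ sinh (1033/2500) <= (425061/1000000) /\ (271647/250000) <= cosh (1033/2500).
Proof.
  destruct (sc_bounds (1033/2500) (1511647/1000000) (661529/1000000) (66153/100000) (30233/20000)) as [h1 [h2 h3]];
    [lra | (cbv [P coef]; simpl INR; lra) | (cbv [P coef]; simpl INR; lra) | (cbv [P coef]; simpl INR; lra) | lra | lra | ].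
  repeat split; lra.
Qed.

Lemma gp_4 : (121179/250000) <= sinh (187/400) /\ sinh (187/400) <= (242359/500000) /\ (555641/500000) <= cosh (187/400).
Proof.
  destruct (sc_bounds (187/400) (1595999/1000000) (313283/500000) (626567/1000000) (798001/500000)) as [h1 [h2 h3]];
    [lra | (cbv [P coef]; simpl INR; lra) | (cbv [P coef]; simpl INR; lra) | (cbv [P coef]; simpl INR; lra) | lra | lra | ].
  repeat split; lra.
Qed.

Lemma gp_5 : (76077/125000) <= sinh (2881/5000) /\ sinh (2881/5000) <= (304309/500000) /\ (1170647/1000000) <= cosh (2881/5000).
Proof.
  destruct (sc_bounds (2881/5000) (27801/15625) (56203/100000) (562031/1000000) (355853/200000)) as [h1 [h2 h3]];
    [lra | (cbv [P coef]; simpl INR; lra) | (cbv [P coef]; simpl INR; lra) | (cbv [P coef]; simpl INR; lra) | lra | lra | ].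
  repeat split; lra.
Qed.

Lemma gp_6 : (2312/3125) <= sinh (137/200) /\ sinh (137/200) <= (369921/500000) /\ (124393/100000) <= cosh (137/200).
Proof.
  destruct (sc_bounds (137/200) (1983771/1000000) (50409/100000) (504091/1000000) (1983773/1000000)) as [h1 [h2 h3]];
    [lra | (cbv [P coef]; simpl INR; lra) | (cbv [P coef]; simpl INR; lra) | (cbv [P coef]; simpl INR; lra) | lra | lra | ].
  repeat split; lra.
Qed.

Lemma gp_7 : (404319/500000) <= sinh (3697/5000) /\ sinh (3697/5000) <= (2527/3125) /\ (1286039/1000000) <= cosh (3697/5000).
Proof.
  destruct (sc_bounds (3697/5000) (1047339/500000) (2387/5000) (477401/1000000) (52367/25000)) as [h1 [h2 h3]];
    [lra | (cbv [P coef]; simpl INR; lra) | (cbv [P coef]; simpl INR; lra) | (cbv [P coef]; simpl INR; lra) | lra | lra | ].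
  repeat split; lra.
Qed.

Lemma gp_8 : (87983/100000) <= sinh (3969/5000) /\ sinh (3969/5000) <= (879833/1000000) /\ (665977/500000) <= cosh (3969/5000).
Proof.
  destruct (sc_bounds (3969/5000) (442357/200000) (452123/1000000) (113031/250000) (552947/250000)) as [h1 [h2 h3]];
    [lra | (cbv [P coef]; simpl INR; lra) | (cbv [P coef]; simpl INR; lra) | (cbv [P coef]; simpl INR; lra) | lra | lra | ].
  repeat split; lra.
Qed.

Lemma gp_9 : (953627/1000000) <= sinh (4241/5000) /\ sinh (4241/5000) <= (953631/1000000) /\ (1381811/1000000) <= cosh (4241/5000).
Proof.
  destruct (sc_bounds (4241/5000) (2335439/1000000) (53523/125000) (85637/200000) (467089/200000)) as [h1 [h2 h3]];
    [lra | (cbv [P coef]; simpl INR; lra) | (cbv [P coef]; simpl INR; lra) | (cbv [P coef]; simpl INR; lra) | lra | lra | ].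
  repeat split; lra.
Qed.

Lemma gp_10 : (515051/500000) <= sinh (361/400) /\ sinh (361/400) <= (206021/200000) /\ (179457/125000) <= cosh (361/400).
Proof.
  destruct (sc_bounds (361/400) (2465759/1000000) (202777/500000) (81111/200000) (2465763/1000000)) as [h1 [h2 h3]];
    [lra | (cbv [P coef]; simpl INR; lra) | (cbv [P coef]; simpl INR; lra) | (cbv [P coef]; simpl INR; lra) | lra | lra | ].
  repeat split; lra.
Qed.

Lemma gp_11 : (221923/200000) <= sinh (598/625) /\ sinh (598/625) <= (1109617/1000000) /\ (186717/125000) <= cosh (598/625).
Proof.
  destruct (sc_bounds (598/625) (325419/125000) (9603/25000) (384121/1000000) (1301677/500000)) as [h1 [h2 h3]];
    [lra | (cbv [P coef]; simpl INR; lra) | (cbv [P coef]; simpl INR; lra) | (cbv [P coef]; simpl INR; lra) | lra | lra | ].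
  repeat split; lra.
Qed.

Lemma gp_12 : (1150661/1000000) <= sinh (123/125) /\ sinh (123/125) <= (230133/200000) /\ (1524473/1000000) <= cosh (123/125).
Proof.
  destruct (sc_bounds (123/125) (535027/200000) (93453/250000) (373813/1000000) (1337571/500000)) as [h1 [h2 h3]];
    [lra | (cbv [P coef]; simpl INR; lra) | (cbv [P coef]; simpl INR; lra) | (cbv [P coef]; simpl INR; lra) | lra | lra | ].
  repeat split; lra.
Qed.

Lemma gp_13 : (1192557/1000000) <= sinh (632/625) /\ sinh (632/625) <= (1192559/1000000) /\ (1556339/1000000) <= cosh (632/625).
Proof.
  destruct (sc_bounds (632/625) (2748897/1000000) (181891/500000) (363783/1000000) (27489/10000)) as [h1 [h2 h3]];
    [lra | (cbv [P coef]; simpl INR; lra) | (cbv [P coef]; simpl INR; lra) | (cbv [P coef]; simpl INR; lra) | lra | lra | ].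
  repeat split; lra.
Qed.

Lemma gp_14 : (154417/125000) <= sinh (649/625) /\ sinh (649/625) <= (61767/50000) /\ (397339/250000) <= cosh (649/625).
Proof.
  destruct (sc_bounds (649/625) (2824693/1000000) (17701/50000) (354021/1000000) (28247/10000)) as [h1 [h2 h3]];
    [lra | (cbv [P coef]; simpl INR; lra) | (cbv [P coef]; simpl INR; lra) | (cbv [P coef]; simpl INR; lra) | lra | lra | ].
  repeat split; lra.
Qed.

Lemma gp_15 : (1279029/1000000) <= sinh (666/625) /\ sinh (666/625) <= (127903/100000) /\ (32471/20000) <= cosh (666/625).
Proof.
  destruct (sc_bounds (666/625) (145129/50000) (344521/1000000) (172261/500000) (2902581/1000000)) as [h1 [h2 h3]];
    [lra | (cbv [P coef]; simpl INR; lra) | (cbv [P coef]; simpl INR; lra) | (cbv [P coef]; simpl INR; lra) | lra | lra | ].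
  repeat split; lra.
Qed.

Lemma gp_16 : (325307/250000) <= sinh (1349/1250) /\ sinh (1349/1250) <= (1301231/1000000) /\ (328219/200000) <= cosh (1349/1250).
Proof.
  destruct (sc_bounds (1349/1250) (735581/250000) (339867/1000000) (84967/250000) (367791/125000)) as [h1 [h2 h3]];
    [lra | (cbv [P coef]; simpl INR; lra) | (cbv [P coef]; simpl INR; lra) | (cbv [P coef]; simpl INR; lra) | lra | lra | ].
  repeat split; lra.
Qed.

Lemma gp_17 : (330917/250000) <= sinh (683/625) /\ sinh (683/625) <= (1323671/1000000) /\ (25921/15625) <= cosh (683/625).
Proof.
  destruct (sc_bounds (683/625) (2982613/1000000) (83819/250000) (335277/1000000) (1491309/500000)) as [h1 [h2 h3]];
    [lra | (cbv [P coef]; simpl INR; lra) | (cbv [P coef]; simpl INR; lra) | (cbv [P coef]; simpl INR; lra) | lra | lra | ].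
  repeat split; lra.
Qed.

Lemma gp_18 : (1346353/1000000) <= sinh (1383/1250) /\ sinh (1383/1250) <= (1346357/1000000) /\ (16771/10000) <= cosh (1383/1250).
Proof.
  destruct (sc_bounds (1383/1250) (1511727/500000) (330747/1000000) (82687/250000) (151173/50000)) as [h1 [h2 h3]];
    [lra | (cbv [P coef]; simpl INR; lra) | (cbv [P coef]; simpl INR; lra) | (cbv [P coef]; simpl INR; lra) | lra | lra | ].
  repeat split; lra.
Qed.

Lemma gp_19 : (339447/250000) <= sinh (2783/2500) /\ sinh (2783/2500) <= (135779/100000) /\ (843147/500000) <= cosh (2783/2500).
Proof.
  destruct (sc_bounds (2783/2500) (3044083/1000000) (164253/500000) (328507/1000000) (608817/200000)) as [h1 [h2 h3]];
    [lra | (cbv [P coef]; simpl INR; lra) | (cbv [P coef]; simpl INR; lra) | (cbv [P coef]; simpl INR; lra) | lra | lra | ].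
  repeat split; lra.
Qed.

Lemma gp_20 : (1369287/1000000) <= sinh (28/25) /\ sinh (28/25) <= (342323/250000) /\ (847783/500000) <= cosh (28/25).
Proof.
  destruct (sc_bounds (28/25) (1532427/500000) (326279/1000000) (8157/25000) (1532431/500000)) as [h1 [h2 h3]];
    [lra | (cbv [P coef]; simpl INR; lra) | (cbv [P coef]; simpl INR; lra) | (cbv [P coef]; simpl INR; lra) | lra | lra | ].
  repeat split; lra.
Qed.

Lemma C3 (nu z : R) : 1 <= nu -> 0 < z -> nu / 2 + 1/4 <= z -> 2 / exp 1 * nu <= z ->
  let a := arcsinh (nu / z) in
  let D := 2 * nu * (a - ln 2) - 2 * z * (cosh a - 1) +
           (3 * ln 3 - 4 * ln 2 + 2 * ln (1 + / sqrt (cosh a)) - ln PI) in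
  D < 0 \/ D < 54/100 - 1/5 * z.
Proof.
  intros hnu hz h1 h2 a D.
  set (Ac := 3 * ln 3 - 4 * ln 2 + 2 * ln (1 + / sqrt (cosh a)) - ln PI) in D.
  assert (G1 : (693147/1000000) <= ln 2) by (apply (ln_ge_of 2 (693147/1000000) (1/2)); [lra|lra|(cbv [P coef]; simpl INR; lra)|lra]).
  assert (G2 : ln 3 <= (1098613/1000000)) by (apply ln_le_of; [lra|lra|(cbv [P coef]; simpl INR; lra)]).
  assert (G3 : (14309/12500) <= ln PI) by (apply (ln_ge_of PI (14309/12500) (318313/1000000)); [lra|lra|(cbv [P coef]; simpl INR; lra)|generalize PI_lo; lra]).
  assert (G4 : exp 1 <= (1359141/500000)).
  { assert (e1 := expm_lo 1 ltac:(lra)). assert (e2 : P 13 (Ropp 1) >= (367879441/1000000000)) by (cbv [P coef]; simpl INR; lra).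
    assert (e3 : exp 1 * exp (Ropp 1) = 1) by (rewrite <- exp_plus; replace (1 + Ropp 1) with 0 by ring; apply exp_0).
    assert (0 < exp 1) by apply exp_pos.
    assert (e4 : exp 1 * (367879441/1000000000) <= 1) by (apply Rle_trans with (exp 1 * exp (Ropp 1)); [apply Rmult_le_compat_l; lra | lra]).
    assert (e5 : (exp 1 - (1359141/500000)) * (367879441/1000000000) <= 0) by lra.
    destruct (Rle_or_lt (exp 1) (1359141/500000)) as [e6|e6]; auto. nra. }
  assert (hS : sinh a = nu / z) by apply sinh_arcsinh.
  assert (hnuS : nu = z * sinh a) by (rewrite hS; field; lra).
  assert (hSpos : 0 < sinh a) by (rewrite hS; apply Rdiv_lt_0_compat; lra).
  assert (hSh : sinh a <= (1359141/1000000)).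
  { rewrite hS. assert (0 < exp 1) by apply exp_pos.
    assert (nu <= z * exp 1 / 2).
    { apply Rmult_le_compat_l with (r := exp 1 / 2) in h2; [|lra].
      replace (exp 1 / 2 * (2 / exp 1 * nu)) with nu in h2 by (field; lra). lra. }
    apply Rcomplements.Rle_div_l; [lra|]. nra. }
  assert (ha0 : 0 < a).
  { unfold a. rewrite <- arcsinh_0. apply arcsinh_lt. apply Rdiv_lt_0_compat; lra. }
destruct (Rle_lt_dec a (1/4)) as [Hh1|Hl1].
{
  assert (Sa_lo : 0 <= sinh a) by lra.
  assert (Ca_lo : 1 <= cosh a) by apply cosh_ge1.
  assert (Sa_hi : sinh a <= (126307/500000)) by (destruct gp_1 as [g1 [g2 g3]]; apply Rle_trans with (sinh (1/4)); [apply sinh_le; lra | lra]).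
  assert (HA : ln (1 + / sqrt (cosh a)) <= (693149/1000000)) by (apply (Acoef_bound (cosh a) (1) (1) (693149/1000000)); [lra|lra|lra|lra|lra|(cbv [P coef]; simpl INR; lra)]).
  assert (HAc : Ac <= (764829/1000000)) by (unfold Ac; lra).
  left. apply (iv_chi nu z a (sinh a) (cosh a) (ln 2) Ac (1/4) (126307/500000) (1) (693147/1000000) (764829/1000000)); lra.
}
destruct (Rle_lt_dec a (897/2500)) as [Hh2|Hl2].
{
  assert (Sa_lo : (63153/250000) <= sinh a) by (destruct gp_1 as [g1 [g2 g3]]; apply Rle_trans with (sinh (1/4)); [lra | apply sinh_le; lra]).
  assert (Ca_lo : (257853/250000) <= cosh a) by (destruct gp_1 as [g1 [g2 g3]]; apply Rle_trans with (cosh (1/4)); [lra | apply cosh_mono; lra]).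
  assert (Sa_hi : sinh a <= (366549/1000000)) by (destruct gp_2 as [g1 [g2 g3]]; apply Rle_trans with (sinh (897/2500)); [apply sinh_le; lra | lra]).
  assert (HA : ln (1 + / sqrt (cosh a)) <= (685447/1000000)) by (apply (Acoef_bound (cosh a) (257853/250000) (196931/200000) (685447/1000000)); [lra|lra|lra|lra|lra|(cbv [P coef]; simpl INR; lra)]).
  assert (HAc : Ac <= (29977/40000)) by (unfold Ac; lra).
  left. apply (iv_chi nu z a (sinh a) (cosh a) (ln 2) Ac (897/2500) (366549/1000000) (257853/250000) (693147/1000000) (29977/40000)); lra.
}
destruct (Rle_lt_dec a (1033/2500)) as [Hh3|Hl3].
{
  assert (Sa_lo : (366547/1000000) <= sinh a) by (destruct gp_2 as [g1 [g2 g3]]; apply Rle_trans with (sinh (897/2500)); [lra | apply sinh_le; lra]).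
  assert (Ca_lo : (532531/500000) <= cosh a) by (destruct gp_2 as [g1 [g2 g3]]; apply Rle_trans with (cosh (897/2500)); [lra | apply cosh_mono; lra]).
  assert (Sa_hi : sinh a <= (425061/1000000)) by (destruct gp_3 as [g1 [g2 g3]]; apply Rle_trans with (sinh (1033/2500)); [apply sinh_le; lra | lra]).
  assert (HA : ln (1 + / sqrt (cosh a)) <= (135503/200000)) by (apply (Acoef_bound (cosh a) (532531/500000) (38759/40000) (135503/200000)); [lra|lra|lra|lra|lra|(cbv [P coef]; simpl INR; lra)]).
  assert (HAc : Ac <= (733561/1000000)) by (unfold Ac; lra).
  left. apply (iv_chi nu z a (sinh a) (cosh a) (ln 2) Ac (1033/2500) (425061/1000000) (532531/500000) (693147/1000000) (733561/1000000)); lra.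
}
destruct (Rle_lt_dec a (187/400)) as [Hh4|Hl4].
{
  assert (Sa_lo : (212529/500000) <= sinh a) by (destruct gp_3 as [g1 [g2 g3]]; apply Rle_trans with (sinh (1033/2500)); [lra | apply sinh_le; lra]).
  assert (Ca_lo : (271647/250000) <= cosh a) by (destruct gp_3 as [g1 [g2 g3]]; apply Rle_trans with (cosh (1033/2500)); [lra | apply cosh_mono; lra]).
  assert (Sa_hi : sinh a <= (242359/500000)) by (destruct gp_4 as [g1 [g2 g3]]; apply Rle_trans with (sinh (187/400)); [apply sinh_le; lra | lra]).
  assert (HA : ln (1 + / sqrt (cosh a)) <= (168151/250000)) by (apply (Acoef_bound (cosh a) (271647/250000) (959329/1000000) (168151/250000)); [lra|lra|lra|lra|lra|(cbv [P coef]; simpl INR; lra)]).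
  assert (HAc : Ac <= (723739/1000000)) by (unfold Ac; lra).
  assert (HB : D <= z * (2 * (212529/500000) * ((187/400) - (693147/1000000)) - 2 * ((271647/250000) - 1)) + (723739/1000000)) by (apply (iv_lin_neg nu z a (sinh a) (cosh a) (ln 2) Ac (187/400) (212529/500000) (271647/250000) (693147/1000000) (723739/1000000)); lra).
  assert (Hz : (500000/242359) <= z) by (apply (zlb1 nu z (sinh a) (242359/500000) (500000/242359)); lra).
  apply (lin_fin1 D z (2 * (212529/500000) * ((187/400) - (693147/1000000)) - 2 * ((271647/250000) - 1)) (723739/1000000) (500000/242359)); lra.
}
destruct (Rle_lt_dec a (2881/5000)) as [Hh5|Hl5].
{
  assert (Sa_lo : (121179/250000) <= sinh a) by (destruct gp_4 as [g1 [g2 g3]]; apply Rle_trans with (sinh (187/400)); [lra | apply sinh_le; lra]).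
  assert (Ca_lo : (555641/500000) <= cosh a) by (destruct gp_4 as [g1 [g2 g3]]; apply Rle_trans with (cosh (187/400)); [lra | apply cosh_mono; lra]).
  assert (Sa_hi : sinh a <= (304309/500000)) by (destruct gp_5 as [g1 [g2 g3]]; apply Rle_trans with (sinh (2881/5000)); [apply sinh_le; lra | lra]).
  assert (HA : ln (1 + / sqrt (cosh a)) <= (333559/500000)) by (apply (Acoef_bound (cosh a) (555641/500000) (948611/1000000) (333559/500000)); [lra|lra|lra|lra|lra|(cbv [P coef]; simpl INR; lra)]).
  assert (HAc : Ac <= (712767/1000000)) by (unfold Ac; lra).
  assert (HB : D <= z * (2 * (121179/250000) * ((2881/5000) - (693147/1000000)) - 2 * ((555641/500000) - 1)) + (712767/1000000)) by (apply (iv_lin_neg nu z a (sinh a) (cosh a) (ln 2) Ac (2881/5000) (121179/250000) (555641/500000) (693147/1000000) (712767/1000000)); lra).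
  assert (Hz : (500000/304309) <= z) by (apply (zlb1 nu z (sinh a) (304309/500000) (500000/304309)); lra).
  apply (lin_fin1 D z (2 * (121179/250000) * ((2881/5000) - (693147/1000000)) - 2 * ((555641/500000) - 1)) (712767/1000000) (500000/304309)); lra.
}
destruct (Rle_lt_dec a (137/200)) as [Hh6|Hl6].
{
  assert (Sa_lo : (76077/125000) <= sinh a) by (destruct gp_5 as [g1 [g2 g3]]; apply Rle_trans with (sinh (2881/5000)); [lra | apply sinh_le; lra]).
  assert (Ca_lo : (1170647/1000000) <= cosh a) by (destruct gp_5 as [g1 [g2 g3]]; apply Rle_trans with (cosh (2881/5000)); [lra | apply cosh_mono; lra]).
  assert (Sa_hi : sinh a <= (369921/500000)) by (destruct gp_6 as [g1 [g2 g3]]; apply Rle_trans with (sinh (137/200)); [apply sinh_le; lra | lra]).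
  assert (HA : ln (1 + / sqrt (cosh a)) <= (130907/200000)) by (apply (Acoef_bound (cosh a) (1170647/1000000) (184849/200000) (130907/200000)); [lra|lra|lra|lra|lra|(cbv [P coef]; simpl INR; lra)]).
  assert (HAc : Ac <= (687601/1000000)) by (unfold Ac; lra).
  assert (HB : D <= z * (2 * (76077/125000) * ((137/200) - (693147/1000000)) - 2 * ((1170647/1000000) - 1)) + (687601/1000000)) by (apply (iv_lin_neg nu z a (sinh a) (cosh a) (ln 2) Ac (137/200) (76077/125000) (1170647/1000000) (693147/1000000) (687601/1000000)); lra).
  assert (Hz : (500000/369921) <= z) by (apply (zlb1 nu z (sinh a) (369921/500000) (500000/369921)); lra).
  apply (lin_fin1 D z (2 * (76077/125000) * ((137/200) - (693147/1000000)) - 2 * ((1170647/1000000) - 1)) (687601/1000000) (500000/369921)); lra.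
}
destruct (Rle_lt_dec a (3697/5000)) as [Hh7|Hl7].
{
  assert (Sa_lo : (2312/3125) <= sinh a) by (destruct gp_6 as [g1 [g2 g3]]; apply Rle_trans with (sinh (137/200)); [lra | apply sinh_le; lra]).
  assert (Ca_lo : (124393/100000) <= cosh a) by (destruct gp_6 as [g1 [g2 g3]]; apply Rle_trans with (cosh (137/200)); [lra | apply cosh_mono; lra]).
  assert (Sa_hi : sinh a <= (2527/3125)) by (destruct gp_7 as [g1 [g2 g3]]; apply Rle_trans with (sinh (3697/5000)); [apply sinh_le; lra | lra]).
  assert (HA : ln (1 + / sqrt (cosh a)) <= (160017/250000)) by (apply (Acoef_bound (cosh a) (124393/100000) (896607/1000000) (160017/250000)); [lra|lra|lra|lra|lra|(cbv [P coef]; simpl INR; lra)]).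
  assert (HAc : Ac <= (658667/1000000)) by (unfold Ac; lra).
  assert (HB : D <= z * (2 * (2527/3125) * ((3697/5000) - (693147/1000000)) - 2 * ((124393/100000) - 1)) + (658667/1000000)) by (apply (iv_lin_pos nu z a (sinh a) (cosh a) (ln 2) Ac (3697/5000) (2527/3125) (124393/100000) (693147/1000000) (658667/1000000)); lra).
  assert (Hz : (3125/2527) <= z) by (apply (zlb1 nu z (sinh a) (2527/3125) (3125/2527)); lra).
  apply (lin_fin1 D z (2 * (2527/3125) * ((3697/5000) - (693147/1000000)) - 2 * ((124393/100000) - 1)) (658667/1000000) (3125/2527)); lra.
}
destruct (Rle_lt_dec a (3969/5000)) as [Hh8|Hl8].
{
  assert (Sa_lo : (404319/500000) <= sinh a) by (destruct gp_7 as [g1 [g2 g3]]; apply Rle_trans with (sinh (3697/5000)); [lra | apply sinh_le; lra]).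
  assert (Ca_lo : (1286039/1000000) <= cosh a) by (destruct gp_7 as [g1 [g2 g3]]; apply Rle_trans with (cosh (3697/5000)); [lra | apply cosh_mono; lra]).
  assert (Sa_hi : sinh a <= (879833/1000000)) by (destruct gp_8 as [g1 [g2 g3]]; apply Rle_trans with (sinh (3969/5000)); [apply sinh_le; lra | lra]).
  assert (HA : ln (1 + / sqrt (cosh a)) <= (632233/1000000)) by (apply (Acoef_bound (cosh a) (1286039/1000000) (440903/500000) (632233/1000000)); [lra|lra|lra|lra|lra|(cbv [P coef]; simpl INR; lra)]).
  assert (HAc : Ac <= (642997/1000000)) by (unfold Ac; lra).
  assert (HB : D <= z * (2 * (879833/1000000) * ((3969/5000) - (693147/1000000)) - 2 * ((1286039/1000000) - 1)) + (642997/1000000)) by (apply (iv_lin_pos nu z a (sinh a) (cosh a) (ln 2) Ac (3969/5000) (879833/1000000) (1286039/1000000) (693147/1000000) (642997/1000000)); lra).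
  assert (Hz : (1000000/879833) <= z) by (apply (zlb1 nu z (sinh a) (879833/1000000) (1000000/879833)); lra).
  apply (lin_fin1 D z (2 * (879833/1000000) * ((3969/5000) - (693147/1000000)) - 2 * ((1286039/1000000) - 1)) (642997/1000000) (1000000/879833)); lra.
}
destruct (Rle_lt_dec a (4241/5000)) as [Hh9|Hl9].
{
  assert (Sa_lo : (87983/100000) <= sinh a) by (destruct gp_8 as [g1 [g2 g3]]; apply Rle_trans with (sinh (3969/5000)); [lra | apply sinh_le; lra]).
  assert (Ca_lo : (665977/500000) <= cosh a) by (destruct gp_8 as [g1 [g2 g3]]; apply Rle_trans with (cosh (3969/5000)); [lra | apply cosh_mono; lra]).
  assert (Sa_hi : sinh a <= (953631/1000000)) by (destruct gp_9 as [g1 [g2 g3]]; apply Rle_trans with (sinh (4241/5000)); [apply sinh_le; lra | lra]).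
  assert (HA : ln (1 + / sqrt (cosh a)) <= (624053/1000000)) by (apply (Acoef_bound (cosh a) (665977/500000) (433237/500000) (624053/1000000)); [lra|lra|lra|lra|lra|(cbv [P coef]; simpl INR; lra)]).
  assert (HAc : Ac <= (626637/1000000)) by (unfold Ac; lra).
  assert (HB : D <= z * (2 * (953631/1000000) * ((4241/5000) - (693147/1000000)) - 2 * ((665977/500000) - 1)) + (626637/1000000)) by (apply (iv_lin_pos nu z a (sinh a) (cosh a) (ln 2) Ac (4241/5000) (953631/1000000) (665977/500000) (693147/1000000) (626637/1000000)); lra).
  assert (Hz : (1000000/953631) <= z) by (apply (zlb1 nu z (sinh a) (953631/1000000) (1000000/953631)); lra).
  apply (lin_fin1 D z (2 * (953631/1000000) * ((4241/5000) - (693147/1000000)) - 2 * ((665977/500000) - 1)) (626637/1000000) (1000000/953631)); lra.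
}
destruct (Rle_lt_dec a (361/400)) as [Hh10|Hl10].
{
  assert (Sa_lo : (953627/1000000) <= sinh a) by (destruct gp_9 as [g1 [g2 g3]]; apply Rle_trans with (sinh (4241/5000)); [lra | apply sinh_le; lra]).
  assert (Ca_lo : (1381811/1000000) <= cosh a) by (destruct gp_9 as [g1 [g2 g3]]; apply Rle_trans with (cosh (4241/5000)); [lra | apply cosh_mono; lra]).
  assert (Sa_hi : sinh a <= (206021/200000)) by (destruct gp_10 as [g1 [g2 g3]]; apply Rle_trans with (sinh (361/400)); [apply sinh_le; lra | lra]).
  assert (HA : ln (1 + / sqrt (cosh a)) <= (123113/200000)) by (apply (Acoef_bound (cosh a) (1381811/1000000) (850699/1000000) (123113/200000)); [lra|lra|lra|lra|lra|(cbv [P coef]; simpl INR; lra)]).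
  assert (HAc : Ac <= (609661/1000000)) by (unfold Ac; lra).
  assert (HB : D <= z * (2 * (206021/200000) * ((361/400) - (693147/1000000)) - 2 * ((1381811/1000000) - 1)) + (609661/1000000)) by (apply (iv_lin_pos nu z a (sinh a) (cosh a) (ln 2) Ac (361/400) (206021/200000) (1381811/1000000) (693147/1000000) (609661/1000000)); lra).
  assert (Hz : (200000/206021) <= z) by (apply (zlb1 nu z (sinh a) (206021/200000) (200000/206021)); lra).
  apply (lin_fin1 D z (2 * (206021/200000) * ((361/400) - (693147/1000000)) - 2 * ((1381811/1000000) - 1)) (609661/1000000) (200000/206021)); lra.
}
destruct (Rle_lt_dec a (598/625)) as [Hh11|Hl11].
{
  assert (Sa_lo : (515051/500000) <= sinh a) by (destruct gp_10 as [g1 [g2 g3]]; apply Rle_trans with (sinh (361/400)); [lra | apply sinh_le; lra]).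
  assert (Ca_lo : (179457/125000) <= cosh a) by (destruct gp_10 as [g1 [g2 g3]]; apply Rle_trans with (cosh (361/400)); [lra | apply cosh_mono; lra]).
  assert (Sa_hi : sinh a <= (1109617/1000000)) by (destruct gp_11 as [g1 [g2 g3]]; apply Rle_trans with (sinh (598/625)); [apply sinh_le; lra | lra]).
  assert (HA : ln (1 + / sqrt (cosh a)) <= (24273/40000)) by (apply (Acoef_bound (cosh a) (179457/125000) (417297/500000) (24273/40000)); [lra|lra|lra|lra|lra|(cbv [P coef]; simpl INR; lra)]).
  assert (HAc : Ac <= (592181/1000000)) by (unfold Ac; lra).
  assert (HB : D <= z * (2 * (1109617/1000000) * ((598/625) - (693147/1000000)) - 2 * ((179457/125000) - 1)) + (592181/1000000)) by (apply (iv_lin_pos nu z a (sinh a) (cosh a) (ln 2) Ac (598/625) (1109617/1000000) (179457/125000) (693147/1000000) (592181/1000000)); lra).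
  assert (Hz : (1000000/1109617) <= z) by (apply (zlb1 nu z (sinh a) (1109617/1000000) (1000000/1109617)); lra).
  apply (lin_fin1 D z (2 * (1109617/1000000) * ((598/625) - (693147/1000000)) - 2 * ((179457/125000) - 1)) (592181/1000000) (1000000/1109617)); lra.
}
destruct (Rle_lt_dec a (123/125)) as [Hh12|Hl12].
{
  assert (Sa_lo : (221923/200000) <= sinh a) by (destruct gp_11 as [g1 [g2 g3]]; apply Rle_trans with (sinh (598/625)); [lra | apply sinh_le; lra]).
  assert (Ca_lo : (186717/125000) <= cosh a) by (destruct gp_11 as [g1 [g2 g3]]; apply Rle_trans with (cosh (598/625)); [lra | apply cosh_mono; lra]).
  assert (Sa_hi : sinh a <= (230133/200000)) by (destruct gp_12 as [g1 [g2 g3]]; apply Rle_trans with (sinh (123/125)); [apply sinh_le; lra | lra]).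
  assert (HA : ln (1 + / sqrt (cosh a)) <= (149463/250000)) by (apply (Acoef_bound (cosh a) (186717/125000) (818207/1000000) (149463/250000)); [lra|lra|lra|lra|lra|(cbv [P coef]; simpl INR; lra)]).
  assert (HAc : Ac <= (114847/200000)) by (unfold Ac; lra).
  assert (HB : D <= z * (2 * (230133/200000) * ((123/125) - (693147/1000000)) - 2 * ((186717/125000) - 1)) + (114847/200000)) by (apply (iv_lin_pos nu z a (sinh a) (cosh a) (ln 2) Ac (123/125) (230133/200000) (186717/125000) (693147/1000000) (114847/200000)); lra).
  assert (Hz : (200000/230133) <= z) by (apply (zlb1 nu z (sinh a) (230133/200000) (200000/230133)); lra).
  apply (lin_fin1 D z (2 * (230133/200000) * ((123/125) - (693147/1000000)) - 2 * ((186717/125000) - 1)) (114847/200000) (200000/230133)); lra.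
}
destruct (Rle_lt_dec a (632/625)) as [Hh13|Hl13].
{
  assert (Sa_lo : (1150661/1000000) <= sinh a) by (destruct gp_12 as [g1 [g2 g3]]; apply Rle_trans with (sinh (123/125)); [lra | apply sinh_le; lra]).
  assert (Ca_lo : (1524473/1000000) <= cosh a) by (destruct gp_12 as [g1 [g2 g3]]; apply Rle_trans with (cosh (123/125)); [lra | apply cosh_mono; lra]).
  assert (Sa_hi : sinh a <= (1192559/1000000)) by (destruct gp_13 as [g1 [g2 g3]]; apply Rle_trans with (sinh (632/625)); [apply sinh_le; lra | lra]).
  assert (HA : ln (1 + / sqrt (cosh a)) <= (296641/500000)) by (apply (Acoef_bound (cosh a) (1524473/1000000) (809917/1000000) (296641/500000)); [lra|lra|lra|lra|lra|(cbv [P coef]; simpl INR; lra)]).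
  assert (HAc : Ac <= (113019/200000)) by (unfold Ac; lra).
  assert (HB : D <= z * (2 * (1192559/1000000) * ((632/625) - (693147/1000000)) - 2 * ((1524473/1000000) - 1)) + (113019/200000)) by (apply (iv_lin_pos nu z a (sinh a) (cosh a) (ln 2) Ac (632/625) (1192559/1000000) (1524473/1000000) (693147/1000000) (113019/200000)); lra).
  assert (Hz : (1000000/1192559) <= z) by (apply (zlb1 nu z (sinh a) (1192559/1000000) (1000000/1192559)); lra).
  apply (lin_fin1 D z (2 * (1192559/1000000) * ((632/625) - (693147/1000000)) - 2 * ((1524473/1000000) - 1)) (113019/200000) (1000000/1192559)); lra.
}
destruct (Rle_lt_dec a (649/625)) as [Hh14|Hl14].
{
  assert (Sa_lo : (1192557/1000000) <= sinh a) by (destruct gp_13 as [g1 [g2 g3]]; apply Rle_trans with (sinh (632/625)); [lra | apply sinh_le; lra]).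
  assert (Ca_lo : (1556339/1000000) <= cosh a) by (destruct gp_13 as [g1 [g2 g3]]; apply Rle_trans with (cosh (632/625)); [lra | apply cosh_mono; lra]).
  assert (Sa_hi : sinh a <= (61767/50000)) by (destruct gp_14 as [g1 [g2 g3]]; apply Rle_trans with (sinh (649/625)); [apply sinh_le; lra | lra]).
  assert (HA : ln (1 + / sqrt (cosh a)) <= (588667/1000000)) by (apply (Acoef_bound (cosh a) (1556339/1000000) (400791/500000) (588667/1000000)); [lra|lra|lra|lra|lra|(cbv [P coef]; simpl INR; lra)]).
  assert (HAc : Ac <= (111173/200000)) by (unfold Ac; lra).
  assert (HB : D <= z * (2 * (61767/50000) * ((649/625) - (693147/1000000)) - 2 * ((1556339/1000000) - 1)) + (111173/200000)) by (apply (iv_lin_pos nu z a (sinh a) (cosh a) (ln 2) Ac (649/625) (61767/50000) (1556339/1000000) (693147/1000000) (111173/200000)); lra).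
  assert (Hz : (50000/61767) <= z) by (apply (zlb1 nu z (sinh a) (61767/50000) (50000/61767)); lra).
  apply (lin_fin1 D z (2 * (61767/50000) * ((649/625) - (693147/1000000)) - 2 * ((1556339/1000000) - 1)) (111173/200000) (50000/61767)); lra.
}
destruct (Rle_lt_dec a (666/625)) as [Hh15|Hl15].
{
  assert (Sa_lo : (154417/125000) <= sinh a) by (destruct gp_14 as [g1 [g2 g3]]; apply Rle_trans with (sinh (649/625)); [lra | apply sinh_le; lra]).
  assert (Ca_lo : (397339/250000) <= cosh a) by (destruct gp_14 as [g1 [g2 g3]]; apply Rle_trans with (cosh (649/625)); [lra | apply cosh_mono; lra]).
  assert (Sa_hi : sinh a <= (127903/100000)) by (destruct gp_15 as [g1 [g2 g3]]; apply Rle_trans with (sinh (666/625)); [apply sinh_le; lra | lra]).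
  assert (HA : ln (1 + / sqrt (cosh a)) <= (58401/100000)) by (apply (Acoef_bound (cosh a) (397339/250000) (793213/1000000) (58401/100000)); [lra|lra|lra|lra|lra|(cbv [P coef]; simpl INR; lra)]).
  assert (HAc : Ac <= (546551/1000000)) by (unfold Ac; lra).
  assert (HB : D <= z * (2 * (127903/100000) * ((666/625) - (693147/1000000)) - 2 * ((397339/250000) - 1)) + (546551/1000000)) by (apply (iv_lin_pos nu z a (sinh a) (cosh a) (ln 2) Ac (666/625) (127903/100000) (397339/250000) (693147/1000000) (546551/1000000)); lra).
  assert (Hz : (100000/127903) <= z) by (apply (zlb1 nu z (sinh a) (127903/100000) (100000/127903)); lra).
  apply (lin_fin1 D z (2 * (127903/100000) * ((666/625) - (693147/1000000)) - 2 * ((397339/250000) - 1)) (546551/1000000) (100000/127903)); lra.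
}
destruct (Rle_lt_dec a (1349/1250)) as [Hh16|Hl16].
{
  assert (Sa_lo : (1279029/1000000) <= sinh a) by (destruct gp_15 as [g1 [g2 g3]]; apply Rle_trans with (sinh (666/625)); [lra | apply sinh_le; lra]).
  assert (Ca_lo : (32471/20000) <= cosh a) by (destruct gp_15 as [g1 [g2 g3]]; apply Rle_trans with (cosh (666/625)); [lra | apply cosh_mono; lra]).
  assert (Sa_hi : sinh a <= (1301231/1000000)) by (destruct gp_16 as [g1 [g2 g3]]; apply Rle_trans with (sinh (1349/1250)); [apply sinh_le; lra | lra]).
  assert (HA : ln (1 + / sqrt (cosh a)) <= (144829/250000)) by (apply (Acoef_bound (cosh a) (32471/20000) (156963/200000) (144829/250000)); [lra|lra|lra|lra|lra|(cbv [P coef]; simpl INR; lra)]).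
  assert (HAc : Ac <= (537163/1000000)) by (unfold Ac; lra).
  assert (HB : D <= z * (2 * (1301231/1000000) * ((1349/1250) - (693147/1000000)) - 2 * ((32471/20000) - 1)) + (537163/1000000)) by (apply (iv_lin_pos nu z a (sinh a) (cosh a) (ln 2) Ac (1349/1250) (1301231/1000000) (32471/20000) (693147/1000000) (537163/1000000)); lra).
  assert (Hz : (1000000/1301231) <= z) by (apply (zlb1 nu z (sinh a) (1301231/1000000) (1000000/1301231)); lra).
  apply (lin_fin1 D z (2 * (1301231/1000000) * ((1349/1250) - (693147/1000000)) - 2 * ((32471/20000) - 1)) (537163/1000000) (1000000/1301231)); lra.
}
destruct (Rle_lt_dec a (683/625)) as [Hh17|Hl17].
{
  assert (Sa_lo : (325307/250000) <= sinh a) by (destruct gp_16 as [g1 [g2 g3]]; apply Rle_trans with (sinh (1349/1250)); [lra | apply sinh_le; lra]).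
  assert (Ca_lo : (328219/200000) <= cosh a) by (destruct gp_16 as [g1 [g2 g3]]; apply Rle_trans with (cosh (1349/1250)); [lra | apply cosh_mono; lra]).
  assert (Sa_hi : sinh a <= (1323671/1000000)) by (destruct gp_17 as [g1 [g2 g3]]; apply Rle_trans with (sinh (683/625)); [apply sinh_le; lra | lra]).
  assert (HA : ln (1 + / sqrt (cosh a)) <= (576957/1000000)) by (apply (Acoef_bound (cosh a) (328219/200000) (780609/1000000) (576957/1000000)); [lra|lra|lra|lra|lra|(cbv [P coef]; simpl INR; lra)]).
  assert (HAc : Ac <= (106489/200000)) by (unfold Ac; lra).
  assert (HB : D <= z * (2 * (1323671/1000000) * ((683/625) - (693147/1000000)) - 2 * ((328219/200000) - 1)) + (106489/200000)) by (apply (iv_lin_pos nu z a (sinh a) (cosh a) (ln 2) Ac (683/625) (1323671/1000000) (328219/200000) (693147/1000000) (106489/200000)); lra).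
  assert (Hz : (1000000/1323671) <= z) by (apply (zlb1 nu z (sinh a) (1323671/1000000) (1000000/1323671)); lra).
  apply (lin_fin1 D z (2 * (1323671/1000000) * ((683/625) - (693147/1000000)) - 2 * ((328219/200000) - 1)) (106489/200000) (1000000/1323671)); lra.
}
destruct (Rle_lt_dec a (1383/1250)) as [Hh18|Hl18].
{
  assert (Sa_lo : (330917/250000) <= sinh a) by (destruct gp_17 as [g1 [g2 g3]]; apply Rle_trans with (sinh (683/625)); [lra | apply sinh_le; lra]).
  assert (Ca_lo : (25921/15625) <= cosh a) by (destruct gp_17 as [g1 [g2 g3]]; apply Rle_trans with (cosh (683/625)); [lra | apply cosh_mono; lra]).
  assert (Sa_hi : sinh a <= (1346357/1000000)) by (destruct gp_18 as [g1 [g2 g3]]; apply Rle_trans with (sinh (1383/1250)); [apply sinh_le; lra | lra]).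
  assert (HA : ln (1 + / sqrt (cosh a)) <= (574589/1000000)) by (apply (Acoef_bound (cosh a) (25921/15625) (388199/500000) (574589/1000000)); [lra|lra|lra|lra|lra|(cbv [P coef]; simpl INR; lra)]).
  assert (HAc : Ac <= (527709/1000000)) by (unfold Ac; lra).
  assert (HB : D <= z * (2 * (1346357/1000000) * ((1383/1250) - (693147/1000000)) - 2 * ((25921/15625) - 1)) + (527709/1000000)) by (apply (iv_lin_pos nu z a (sinh a) (cosh a) (ln 2) Ac (1383/1250) (1346357/1000000) (25921/15625) (693147/1000000) (527709/1000000)); lra).
  assert (Hz : (1000000/1346357) <= z) by (apply (zlb1 nu z (sinh a) (1346357/1000000) (1000000/1346357)); lra).
  apply (lin_fin1 D z (2 * (1346357/1000000) * ((1383/1250) - (693147/1000000)) - 2 * ((25921/15625) - 1)) (527709/1000000) (1000000/1346357)); lra.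
}
destruct (Rle_lt_dec a (2783/2500)) as [Hh19|Hl19].
{
  assert (Sa_lo : (1346353/1000000) <= sinh a) by (destruct gp_18 as [g1 [g2 g3]]; apply Rle_trans with (sinh (1383/1250)); [lra | apply sinh_le; lra]).
  assert (Ca_lo : (16771/10000) <= cosh a) by (destruct gp_18 as [g1 [g2 g3]]; apply Rle_trans with (cosh (1383/1250)); [lra | apply cosh_mono; lra]).
  assert (Sa_hi : sinh a <= (135779/100000)) by (destruct gp_19 as [g1 [g2 g3]]; apply Rle_trans with (sinh (2783/2500)); [apply sinh_le; lra | lra]).
  assert (HA : ln (1 + / sqrt (cosh a)) <= (286107/500000)) by (apply (Acoef_bound (cosh a) (16771/10000) (96523/125000) (286107/500000)); [lra|lra|lra|lra|lra|(cbv [P coef]; simpl INR; lra)]).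
  assert (HAc : Ac <= (522959/1000000)) by (unfold Ac; lra).
  assert (HB : D <= z * (2 * (135779/100000) * ((2783/2500) - (693147/1000000)) - 2 * ((16771/10000) - 1)) + (522959/1000000)) by (apply (iv_lin_pos nu z a (sinh a) (cosh a) (ln 2) Ac (2783/2500) (135779/100000) (16771/10000) (693147/1000000) (522959/1000000)); lra).
  assert (Hz : (500000/653647) <= z) by (apply (zlb2 nu z (sinh a) (1346353/1000000) (500000/653647)); lra).
  apply (lin_fin1 D z (2 * (135779/100000) * ((2783/2500) - (693147/1000000)) - 2 * ((16771/10000) - 1)) (522959/1000000) (500000/653647)); lra.
}
destruct (Rle_lt_dec a (28/25)) as [Hh20|Hl20].
{
  assert (Sa_lo : (339447/250000) <= sinh a) by (destruct gp_19 as [g1 [g2 g3]]; apply Rle_trans with (sinh (2783/2500)); [lra | apply sinh_le; lra]).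
  assert (Ca_lo : (843147/500000) <= cosh a) by (destruct gp_19 as [g1 [g2 g3]]; apply Rle_trans with (cosh (2783/2500)); [lra | apply cosh_mono; lra]).
  assert (Sa_hi : sinh a <= (342323/250000)) by (destruct gp_20 as [g1 [g2 g3]]; apply Rle_trans with (sinh (28/25)); [apply sinh_le; lra | lra]).
  assert (HA : ln (1 + / sqrt (cosh a)) <= (35689/62500)) by (apply (Acoef_bound (cosh a) (843147/500000) (192519/250000) (35689/62500)); [lra|lra|lra|lra|lra|(cbv [P coef]; simpl INR; lra)]).
  assert (HAc : Ac <= (520579/1000000)) by (unfold Ac; lra).
  assert (HB : D <= z * (2 * (342323/250000) * ((28/25) - (693147/1000000)) - 2 * ((843147/500000) - 1)) + (520579/1000000)) by (apply (iv_lin_pos nu z a (sinh a) (cosh a) (ln 2) Ac (28/25) (342323/250000) (843147/500000) (693147/1000000) (520579/1000000)); lra).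
  assert (Hz : (125000/160553) <= z) by (apply (zlb2 nu z (sinh a) (339447/250000) (125000/160553)); lra).
  apply (lin_fin1 D z (2 * (342323/250000) * ((28/25) - (693147/1000000)) - 2 * ((843147/500000) - 1)) (520579/1000000) (125000/160553)); lra.
}
  exfalso. destruct gp_20 as [g1 [g2 g3]].
  assert (sinh (28/25) < sinh a) by (apply sinh_lt; lra). lra.
Qed.

Lemma ln_le_x x : 0 < x -> ln x <= x - 1.
Proof. intros hx. generalize (exp_ineq1_le (ln x)). rewrite exp_ln by auto. lra. Qed.

Lemma ln_le_mono x y : 0 < x -> x <= y -> ln x <= ln y.
Proof. intros hx [h|h]. left; apply ln_increasing; auto. subst; lra. Qed.

Definition hW (c L : R) := L - ln L + c * (ln L / L).

Lemma hW_incr c x y : 3/2 <= c <= 8/5 -> 1 <= x -> x < y -> hW c x < hW c y.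
Proof.
  intros hc hx hxy.
  apply (incr_function_le (hW c) (Finite 1) p_infty (fun t => 1 - / t + c * ((1 - ln t) / (t * t)))).
  - intros t ht _. simpl in ht. unfold hW. auto_derive. lra. field. lra.
  - intros t ht _. simpl in ht. assert (hl := ln_le_x t ltac:(lra)).
    assert (ht2 : 0 < t * t) by nra.
    assert (hcl : c * ln t <= c * (t - 1)) by (apply Rmult_le_compat_l; lra).
    assert (hsq : 0 <= (t - (1 + c) / 2) * (t - (1 + c) / 2)) by apply Rle_0_sqr.
    assert (hc2 : 2 * c - (1 + c) * (1 + c) / 4 > 0) by nra.
    assert (h1 : t * t - t + c * (1 - ln t) > 0) by nra.
    assert (h2 : 1 - / t + c * ((1 - ln t) / (t * t)) = (t * t - t + c * (1 - ln t)) / (t * t)) by (field; lra).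
    rewrite h2. apply Rdiv_lt_0_compat; lra.
  - simpl; lra.
  - lra.
  - simpl; auto.
Qed.

Lemma c2_all (c w L : R) : 3/2 <= c <= 8/5 -> 3/2 <= w -> 1 <= L -> hW c L <= w -> L <= w + ln w.
Proof.
  intros hc hw hL hh.
  set (y := w + ln w).
  assert (hlw : 0 < ln w) by (rewrite <- ln_1; apply ln_increasing; lra).
  assert (hle : ln w <= w / exp 1).
  { assert (h := ln_le_x (w / exp 1) ltac:(apply Rdiv_lt_0_compat; [lra| apply exp_pos])).
    unfold Rdiv in h. rewrite ln_mult in h by (try lra; apply Rinv_0_lt_compat, exp_pos).
    rewrite ln_Rinv in h by apply exp_pos. rewrite ln_exp in h. unfold Rdiv. lra. }
  assert (he : 2 < exp 1) by (generalize (exp_ineq1 1 ltac:(lra)); lra).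
  assert (hle2 : ln w <= w / 2).
  { apply Rle_trans with (w / exp 1); auto. apply Rmult_le_compat_l; [lra|].
    apply Rinv_le_contravar; lra. }
  assert (hy : w <= y) by (unfold y; lra).
  assert (hy1 : 1 <= y) by lra.
  assert (hly : ln w <= ln y) by (apply ln_le_mono; lra).
  assert (hq : ln y - ln w <= ln w / w).
  { assert (h := ln_le_x (y / w) ltac:(apply Rdiv_lt_0_compat; lra)).
    unfold Rdiv in h. rewrite ln_mult in h by (try lra; apply Rinv_0_lt_compat; lra).
    rewrite ln_Rinv in h by lra. replace (y * / w - 1) with (ln w / w) in h by (unfold y; field; lra). lra. }
  assert (hcy : ln w / w <= c * (ln y / y)).
  { assert (c * w >= 3/2 * w) by nra. assert (c * w >= y) by (unfold y; lra).
    assert (ln w / w <= c * ln w / y).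
    { apply Rcomplements.Rle_div_l; [lra|].
      replace (c * ln w / y * w) with (ln w * (c * w / y)) by (field; lra).
      assert (1 <= c * w / y) by (apply Rcomplements.Rle_div_r; lra). nra. }
    assert (c * ln w / y <= c * (ln y / y)).
    { unfold Rdiv. rewrite Rmult_assoc. apply Rmult_le_compat_l; [lra|].
      apply Rmult_le_compat_r; [left; apply Rinv_0_lt_compat; lra| lra]. }
    lra. }
  assert (hhy : w <= hW c y) by (unfold hW, y in *; lra).
  destruct (Rle_or_lt L y) as [h|h]; auto.
  assert (hW c y < hW c L) by (apply hW_incr; lra). lra.
Qed.

Lemma c2_iv (c w L w1 w2 lw1 lw2 Y1 Y2 lY1 lY2 clo : R) :
  clo <= c -> 3/2 <= c <= 8/5 -> w1 <= w <= w2 -> lw1 <= ln w1 -> ln w2 <= lw2 -> 0 < w1 ->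
  Y1 = 11/10 * w1 + lw1 - 54/100 -> Y2 = 11/10 * w2 + lw2 - 54/100 -> 1 <= Y1 ->
  lY1 <= ln Y1 -> ln Y2 <= lY2 -> 0 <= lY1 -> 0 < clo ->
  0 <= 1/10 * w1 + lw1 - 54/100 - lY2 + clo * lY1 / Y2 ->
  1 <= L -> hW c L <= w -> L <= w + ln w - (54/100 - 1/10 * w).
Proof.
  intros hclo hc hw hl1 hl2 hw1 hY1 hY2 hY11 hlY1 hlY2 hlY10 hclo0 hm hL hh.
  set (y := w + ln w - (54/100 - 1/10 * w)).
  assert (a1 : lw1 <= ln w) by (apply Rle_trans with (ln w1); auto; apply ln_le_mono; lra).
  assert (a2 : ln w <= lw2) by (apply Rle_trans with (ln w2); auto; apply ln_le_mono; lra).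
  assert (b1 : Y1 <= y) by (unfold y; lra).
  assert (b2 : y <= Y2) by (unfold y; lra).
  assert (c1 : ln y <= lY2) by (apply Rle_trans with (ln Y2); auto; apply ln_le_mono; lra).
  assert (c2 : lY1 <= ln y) by (apply Rle_trans with (ln Y1); auto; apply ln_le_mono; lra).
  assert (d1 : clo * lY1 / Y2 <= c * (ln y / y)).
  { apply Rle_trans with (clo * lY1 / y).
    - unfold Rdiv. apply Rmult_le_compat_l; [nra|]. apply Rinv_le_contravar; lra.
    - assert (clo * lY1 <= c * ln y) by nra.
      replace (c * (ln y / y)) with (c * ln y / y) by (field; lra).
      unfold Rdiv. apply Rmult_le_compat_r; [left; apply Rinv_0_lt_compat; lra | lra]. }
  assert (hhy : w <= hW c y) by (unfold hW, y in *; lra).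
  destruct (Rle_or_lt L y) as [h|h]; auto.
  assert (hW c y < hW c L) by (apply hW_incr; lra). lra.
Qed.

Lemma C2 (c w L : R) : (197747/125000) <= c <= 8/5 -> 3/2 <= w <= 54/10 -> 1 <= L -> hW c L <= w ->
  L <= w + ln w - (54/100 - 1/10 * w).
Proof.
  intros hc hw hL hh.
destruct (Rle_lt_dec w (15117/10000)) as [Hh1|Hl1].
{
  apply (c2_iv c w L (3/2) (15117/10000) (405463/1000000) (413237/1000000) (1515463/1000000) (1536107/1000000) (415719/1000000) (214627/500000) (197747/125000)); try lra.
  - apply (ln_ge_of (3/2) (405463/1000000) (83333509/125000000)); [lra|lra|(cbv [P coef]; simpl INR; lra)|lra].
  - apply ln_le_of; [lra|lra|(cbv [P coef]; simpl INR; lra)].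
  - apply (ln_ge_of (1515463/1000000) (415719/1000000) (329932833/500000000)); [lra|lra|(cbv [P coef]; simpl INR; lra)|lra].
  - apply ln_le_of; [lra|lra|(cbv [P coef]; simpl INR; lra)].
}
destruct (Rle_lt_dec w (7617/5000)) as [Hh2|Hl2].
{
  apply (c2_iv c w L (15117/10000) (7617/5000) (25827/62500) (420947/1000000) (768051/500000) (1556687/1000000) (214623/500000) (221281/500000) (197747/125000)); try lra.
  - apply (ln_ge_of (15117/10000) (25827/62500) (330754397/500000000)); [lra|lra|(cbv [P coef]; simpl INR; lra)|lra].
  - apply ln_le_of; [lra|lra|(cbv [P coef]; simpl INR; lra)].
  - apply (ln_ge_of (768051/500000) (214623/500000) (650999763/1000000000)); [lra|lra|(cbv [P coef]; simpl INR; lra)|lra].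
  - apply ln_le_of; [lra|lra|(cbv [P coef]; simpl INR; lra)].
}
destruct (Rle_lt_dec w (1919/1250)) as [Hh3|Hl3].
{
  apply (c2_iv c w L (7617/5000) (1919/1250) (210471/500000) (428663/1000000) (778341/500000) (1577383/1000000) (221277/500000) (45577/100000) (197747/125000)); try lra.
  - apply (ln_ge_of (7617/5000) (210471/500000) (656428173/1000000000)); [lra|lra|(cbv [P coef]; simpl INR; lra)|lra].
  - apply ln_le_of; [lra|lra|(cbv [P coef]; simpl INR; lra)].
  - apply (ln_ge_of (778341/500000) (221277/500000) (12847873/20000000)); [lra|lra|(cbv [P coef]; simpl INR; lra)|lra].
  - apply ln_le_of; [lra|lra|(cbv [P coef]; simpl INR; lra)].
}
destruct (Rle_lt_dec w (15469/10000)) as [Hh4|Hl4].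
{
  apply (c2_iv c w L (1919/1250) (15469/10000) (214329/500000) (87251/200000) (788689/500000) (319569/200000) (455761/1000000) (234329/500000) (197747/125000)); try lra.
  - apply (ln_ge_of (1919/1250) (214329/500000) (651382663/1000000000)); [lra|lra|(cbv [P coef]; simpl INR; lra)|lra].
  - apply ln_le_of; [lra|lra|(cbv [P coef]; simpl INR; lra)].
  - apply (ln_ge_of (788689/500000) (455761/1000000) (79245667/125000000)); [lra|lra|(cbv [P coef]; simpl INR; lra)|lra].
  - apply ln_le_of; [lra|lra|(cbv [P coef]; simpl INR; lra)].
}
destruct (Rle_lt_dec w (1963/1250)) as [Hh5|Hl5].
{
  apply (c2_iv c w L (15469/10000) (1963/1250) (349/800) (451333/1000000) (19973/12500) (1638773/1000000) (9373/20000) (9879/20000) (197747/125000)); try lra.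
  - apply (ln_ge_of (15469/10000) (349/800) (646456091/1000000000)); [lra|lra|(cbv [P coef]; simpl INR; lra)|lra].
  - apply ln_le_of; [lra|lra|(cbv [P coef]; simpl INR; lra)].
  - apply (ln_ge_of (19973/12500) (9373/20000) (625846591/1000000000)); [lra|lra|(cbv [P coef]; simpl INR; lra)|lra].
  - apply ln_le_of; [lra|lra|(cbv [P coef]; simpl INR; lra)].
}
destruct (Rle_lt_dec w (7969/5000)) as [Hh6|Hl6].
{
  apply (c2_iv c w L (1963/1250) (7969/5000) (7052/15625) (116531/250000) (102423/62500) (209913/125000) (246971/500000) (259191/500000) (197747/125000)); try lra.
  - apply (ln_ge_of (1963/1250) (7052/15625) (636781943/1000000000)); [lra|lra|(cbv [P coef]; simpl INR; lra)|lra].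
  - apply ln_le_of; [lra|lra|(cbv [P coef]; simpl INR; lra)].
  - apply (ln_ge_of (102423/62500) (246971/500000) (305108087/500000000)); [lra|lra|(cbv [P coef]; simpl INR; lra)|lra].
  - apply ln_le_of; [lra|lra|(cbv [P coef]; simpl INR; lra)].
}
destruct (Rle_lt_dec w (4043/2500)) as [Hh7|Hl7].
{
  apply (c2_iv c w L (7969/5000) (4043/2500) (466119/1000000) (480699/1000000) (1679299/1000000) (1719619/1000000) (259187/500000) (108421/200000) (197747/125000)); try lra.
  - apply (ln_ge_of (7969/5000) (466119/1000000) (125486523/200000000)); [lra|lra|(cbv [P coef]; simpl INR; lra)|lra].
  - apply ln_le_of; [lra|lra|(cbv [P coef]; simpl INR; lra)].
  - apply (ln_ge_of (1679299/1000000) (259187/500000) (74436003/125000000)); [lra|lra|(cbv [P coef]; simpl INR; lra)|lra].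
  - apply ln_le_of; [lra|lra|(cbv [P coef]; simpl INR; lra)].
}
destruct (Rle_lt_dec w (8203/5000)) as [Hh8|Hl8].
{
  apply (c2_iv c w L (4043/2500) (8203/5000) (240347/500000) (99013/200000) (859807/500000) (70389/40000) (542097/1000000) (14129/25000) (197747/125000)); try lra.
  - apply (ln_ge_of (4043/2500) (240347/500000) (123670821/200000000)); [lra|lra|(cbv [P coef]; simpl INR; lra)|lra].
  - apply ln_le_of; [lra|lra|(cbv [P coef]; simpl INR; lra)].
  - apply (ln_ge_of (859807/500000) (542097/1000000) (581527509/1000000000)); [lra|lra|(cbv [P coef]; simpl INR; lra)|lra].
  - apply ln_le_of; [lra|lra|(cbv [P coef]; simpl INR; lra)].
}
destruct (Rle_lt_dec w (208/125)) as [Hh9|Hl9].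
{
  apply (c2_iv c w L (8203/5000) (208/125) (24753/50000) (509227/1000000) (43993/25000) (1799627/1000000) (17661/31250) (293791/500000) (197747/125000)); try lra.
  - apply (ln_ge_of (8203/5000) (24753/50000) (304767167/500000000)); [lra|lra|(cbv [P coef]; simpl INR; lra)|lra].
  - apply ln_le_of; [lra|lra|(cbv [P coef]; simpl INR; lra)].
  - apply (ln_ge_of (43993/25000) (17661/31250) (284136881/500000000)); [lra|lra|(cbv [P coef]; simpl INR; lra)|lra].
  - apply ln_le_of; [lra|lra|(cbv [P coef]; simpl INR; lra)].
}
destruct (Rle_lt_dec w (27/16)) as [Hh10|Hl10].
{
  apply (c2_iv c w L (208/125) (27/16) (254611/500000) (523251/1000000) (899811/500000) (1839501/1000000) (293787/500000) (609497/1000000) (197747/125000)); try lra.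
  - apply (ln_ge_of (208/125) (254611/500000) (300481473/500000000)); [lra|lra|(cbv [P coef]; simpl INR; lra)|lra].
  - apply ln_le_of; [lra|lra|(cbv [P coef]; simpl INR; lra)].
  - apply (ln_ge_of (899811/500000) (293787/500000) (111134743/200000000)); [lra|lra|(cbv [P coef]; simpl INR; lra)|lra].
  - apply ln_le_of; [lra|lra|(cbv [P coef]; simpl INR; lra)].
}
destruct (Rle_lt_dec w (1711/1000)) as [Hh11|Hl11].
{
  apply (c2_iv c w L (27/16) (1711/1000) (261623/500000) (13427/25000) (229937/125000) (93959/50000) (609489/1000000) (315419/500000) (197747/125000)); try lra.
  - apply (ln_ge_of (27/16) (261623/500000) (296296931/500000000)); [lra|lra|(cbv [P coef]; simpl INR; lra)|lra].
  - apply ln_le_of; [lra|lra|(cbv [P coef]; simpl INR; lra)].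
  - apply (ln_ge_of (229937/125000) (609489/1000000) (33976787/62500000)); [lra|lra|(cbv [P coef]; simpl INR; lra)|lra].
  - apply ln_le_of; [lra|lra|(cbv [P coef]; simpl INR; lra)].
}
destruct (Rle_lt_dec w (1084/625)) as [Hh12|Hl12].
{
  apply (c2_iv c w L (1711/1000) (1084/625) (21483/40000) (68833/125000) (75167/40000) (239813/125000) (63083/100000) (162887/250000) (197747/125000)); try lra.
  - apply (ln_ge_of (1711/1000) (21483/40000) (292227643/500000000)); [lra|lra|(cbv [P coef]; simpl INR; lra)|lra].
  - apply ln_le_of; [lra|lra|(cbv [P coef]; simpl INR; lra)].
  - apply (ln_ge_of (75167/40000) (63083/100000) (532149933/1000000000)); [lra|lra|(cbv [P coef]; simpl INR; lra)|lra].
  - apply ln_le_of; [lra|lra|(cbv [P coef]; simpl INR; lra)].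
}
destruct (Rle_lt_dec w (4453/2500)) as [Hh13|Hl13].
{
  apply (c2_iv c w L (1084/625) (4453/2500) (550659/1000000) (57729/100000) (1918499/1000000) (199661/100000) (651541/1000000) (691453/1000000) (197747/125000)); try lra.
  - apply (ln_ge_of (1084/625) (550659/1000000) (23062789/40000000)); [lra|lra|(cbv [P coef]; simpl INR; lra)|lra].
  - apply ln_le_of; [lra|lra|(cbv [P coef]; simpl INR; lra)].
  - apply (ln_ge_of (1918499/1000000) (651541/1000000) (521241923/1000000000)); [lra|lra|(cbv [P coef]; simpl INR; lra)|lra].
  - apply ln_le_of; [lra|lra|(cbv [P coef]; simpl INR; lra)].
}
destruct (Rle_lt_dec w (18281/10000)) as [Hh14|Hl14].
{
  apply (c2_iv c w L (4453/2500) (18281/10000) (115457/200000) (7541/12500) (399321/200000) (207419/100000) (345723/500000) (729573/1000000) (197747/125000)); try lra.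
  - apply (ln_ge_of (4453/2500) (115457/200000) (140355139/250000000)); [lra|lra|(cbv [P coef]; simpl INR; lra)|lra].
  - apply ln_le_of; [lra|lra|(cbv [P coef]; simpl INR; lra)].
  - apply (ln_ge_of (399321/200000) (345723/500000) (250425657/500000000)); [lra|lra|(cbv [P coef]; simpl INR; lra)|lra].
  - apply ln_le_of; [lra|lra|(cbv [P coef]; simpl INR; lra)].
}
destruct (Rle_lt_dec w (15/8)) as [Hh15|Hl15].
{
  apply (c2_iv c w L (18281/10000) (15/8) (24131/40000) (628611/1000000) (414837/200000) (2151111/1000000) (364783/500000) (765987/1000000) (197747/125000)); try lra.
  - apply (ln_ge_of (18281/10000) (24131/40000) (547017217/1000000000)); [lra|lra|(cbv [P coef]; simpl INR; lra)|lra].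
  - apply ln_le_of; [lra|lra|(cbv [P coef]; simpl INR; lra)].
  - apply (ln_ge_of (414837/200000) (364783/500000) (482118183/1000000000)); [lra|lra|(cbv [P coef]; simpl INR; lra)|lra].
  - apply ln_le_of; [lra|lra|(cbv [P coef]; simpl INR; lra)].
}
destruct (Rle_lt_dec w (19219/10000)) as [Hh16|Hl16].
{
  apply (c2_iv c w L (15/8) (19219/10000) (314303/500000) (653317/1000000) (1075553/500000) (2227407/1000000) (38299/50000) (800841/1000000) (197747/125000)); try lra.
  - apply (ln_ge_of (15/8) (314303/500000) (533334751/1000000000)); [lra|lra|(cbv [P coef]; simpl INR; lra)|lra].
  - apply ln_le_of; [lra|lra|(cbv [P coef]; simpl INR; lra)].
  - apply (ln_ge_of (1075553/500000) (38299/50000) (464878127/1000000000)); [lra|lra|(cbv [P coef]; simpl INR; lra)|lra].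
  - apply ln_le_of; [lra|lra|(cbv [P coef]; simpl INR; lra)].
}
destruct (Rle_lt_dec w (2461/1250)) as [Hh17|Hl17].
{
  apply (c2_iv c w L (19219/10000) (2461/1250) (10208/15625) (677427/1000000) (1113701/500000) (2303107/1000000) (800833/1000000) (417131/500000) (197747/125000)); try lra.
  - apply (ln_ge_of (19219/10000) (10208/15625) (520319621/1000000000)); [lra|lra|(cbv [P coef]; simpl INR; lra)|lra].
  - apply ln_le_of; [lra|lra|(cbv [P coef]; simpl INR; lra)].
  - apply (ln_ge_of (1113701/500000) (800833/1000000) (112238707/250000000)); [lra|lra|(cbv [P coef]; simpl INR; lra)|lra].
  - apply ln_le_of; [lra|lra|(cbv [P coef]; simpl INR; lra)].
}
destruct (Rle_lt_dec w (5039/2500)) as [Hh18|Hl18].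
{
  apply (c2_iv c w L (2461/1250) (5039/2500) (338711/500000) (700919/1000000) (1151551/500000) (2378079/1000000) (417127/500000) (108287/125000) (197747/125000)); try lra.
  - apply (ln_ge_of (2461/1250) (338711/500000) (101584947/200000000)); [lra|lra|(cbv [P coef]; simpl INR; lra)|lra].
  - apply ln_le_of; [lra|lra|(cbv [P coef]; simpl INR; lra)].
  - apply (ln_ge_of (1151551/500000) (417127/500000) (1696087/3906250)); [lra|lra|(cbv [P coef]; simpl INR; lra)|lra].
  - apply ln_le_of; [lra|lra|(cbv [P coef]; simpl INR; lra)].
}
destruct (Rle_lt_dec w (33/16)) as [Hh19|Hl19].
{
  apply (c2_iv c w L (5039/2500) (33/16) (350457/500000) (723921/1000000) (1189037/500000) (2452671/1000000) (54143/62500) (44859/50000) (197747/125000)); try lra.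
  - apply (ln_ge_of (5039/2500) (350457/500000) (31008227/62500000)); [lra|lra|(cbv [P coef]; simpl INR; lra)|lra].
  - apply ln_le_of; [lra|lra|(cbv [P coef]; simpl INR; lra)].
  - apply (ln_ge_of (1189037/500000) (54143/62500) (420509587/1000000000)); [lra|lra|(cbv [P coef]; simpl INR; lra)|lra].
  - apply ln_le_of; [lra|lra|(cbv [P coef]; simpl INR; lra)].
}
destruct (Rle_lt_dec w (10547/5000)) as [Hh20|Hl20].
{
  apply (c2_iv c w L (33/16) (10547/5000) (180979/250000) (373203/500000) (1226333/500000) (1263373/500000) (897173/1000000) (185387/200000) (197747/125000)); try lra.
  - apply (ln_ge_of (33/16) (180979/250000) (484849861/1000000000)); [lra|lra|(cbv [P coef]; simpl INR; lra)|lra].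
  - apply ln_le_of; [lra|lra|(cbv [P coef]; simpl INR; lra)].
  - apply (ln_ge_of (1226333/500000) (897173/1000000) (203860329/500000000)); [lra|lra|(cbv [P coef]; simpl INR; lra)|lra].
  - apply ln_le_of; [lra|lra|(cbv [P coef]; simpl INR; lra)].
}
destruct (Rle_lt_dec w (10781/5000)) as [Hh21|Hl21].
{
  apply (c2_iv c w L (10547/5000) (10781/5000) (746401/1000000) (15367/20000) (2526741/1000000) (260017/100000) (57933/62500) (955579/1000000) (197747/125000)); try lra.
  - apply (ln_ge_of (10547/5000) (746401/1000000) (237034831/500000000)); [lra|lra|(cbv [P coef]; simpl INR; lra)|lra].
  - apply ln_le_of; [lra|lra|(cbv [P coef]; simpl INR; lra)].
  - apply (ln_ge_of (2526741/1000000) (57933/62500) (395767643/1000000000)); [lra|lra|(cbv [P coef]; simpl INR; lra)|lra].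
  - apply ln_le_of; [lra|lra|(cbv [P coef]; simpl INR; lra)].
}
destruct (Rle_lt_dec w (22031/10000)) as [Hh22|Hl22].
{
  apply (c2_iv c w L (10781/5000) (22031/10000) (153669/200000) (197467/250000) (520033/200000) (1336639/500000) (238893/250000) (245827/250000) (197747/125000)); try lra.
  - apply (ln_ge_of (10781/5000) (153669/200000) (463779989/1000000000)); [lra|lra|(cbv [P coef]; simpl INR; lra)|lra].
  - apply ln_le_of; [lra|lra|(cbv [P coef]; simpl INR; lra)].
  - apply (ln_ge_of (520033/200000) (238893/250000) (192296047/500000000)); [lra|lra|(cbv [P coef]; simpl INR; lra)|lra].
  - apply ln_le_of; [lra|lra|(cbv [P coef]; simpl INR; lra)].
}
destruct (Rle_lt_dec w (9/4)) as [Hh23|Hl23].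
{
  apply (c2_iv c w L (22031/10000) (9/4) (789863/1000000) (810933/1000000) (2673273/1000000) (2745933/1000000) (983301/1000000) (1010123/1000000) (197747/125000)); try lra.
  - apply (ln_ge_of (22031/10000) (789863/1000000) (14184593/31250000)); [lra|lra|(cbv [P coef]; simpl INR; lra)|lra].
  - apply ln_le_of; [lra|lra|(cbv [P coef]; simpl INR; lra)].
  - apply (ln_ge_of (2673273/1000000) (983301/1000000) (374074239/1000000000)); [lra|lra|(cbv [P coef]; simpl INR; lra)|lra].
  - apply ln_le_of; [lra|lra|(cbv [P coef]; simpl INR; lra)].
}
destruct (Rle_lt_dec w (22969/10000)) as [Hh24|Hl24].
{
  apply (c2_iv c w L (9/4) (22969/10000) (50683/62500) (831563/1000000) (343241/125000) (2818153/1000000) (1010117/1000000) (259021/250000) (197747/125000)); try lra.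
  - apply (ln_ge_of (9/4) (50683/62500) (444445429/1000000000)); [lra|lra|(cbv [P coef]; simpl INR; lra)|lra].
  - apply ln_le_of; [lra|lra|(cbv [P coef]; simpl INR; lra)].
  - apply (ln_ge_of (343241/125000) (1010117/1000000) (22761023/62500000)); [lra|lra|(cbv [P coef]; simpl INR; lra)|lra].
  - apply ln_le_of; [lra|lra|(cbv [P coef]; simpl INR; lra)].
}
destruct (Rle_lt_dec w (11719/5000)) as [Hh25|Hl25].
{
  apply (c2_iv c w L (22969/10000) (11719/5000) (415779/500000) (13309/15625) (704537/250000) (722489/250000) (1036077/1000000) (265311/250000) (197747/125000)); try lra.
  - apply (ln_ge_of (22969/10000) (415779/500000) (8707409/20000000)); [lra|lra|(cbv [P coef]; simpl INR; lra)|lra].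
  - apply ln_le_of; [lra|lra|(cbv [P coef]; simpl INR; lra)].
  - apply (ln_ge_of (704537/250000) (1036077/1000000) (44355501/125000000)); [lra|lra|(cbv [P coef]; simpl INR; lra)|lra].
  - apply ln_le_of; [lra|lra|(cbv [P coef]; simpl INR; lra)].
}
destruct (Rle_lt_dec w (11953/5000)) as [Hh26|Hl26].
{
  apply (c2_iv c w L (11719/5000) (11953/5000) (851771/1000000) (871547/1000000) (2889951/1000000) (2961207/1000000) (1061237/1000000) (1085599/1000000) (197747/125000)); try lra.
  - apply (ln_ge_of (11719/5000) (851771/1000000) (426658649/1000000000)); [lra|lra|(cbv [P coef]; simpl INR; lra)|lra].
  - apply ln_le_of; [lra|lra|(cbv [P coef]; simpl INR; lra)].
  - apply (ln_ge_of (2889951/1000000) (1061237/1000000) (346027509/1000000000)); [lra|lra|(cbv [P coef]; simpl INR; lra)|lra].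
  - apply ln_le_of; [lra|lra|(cbv [P coef]; simpl INR; lra)].
}
destruct (Rle_lt_dec w (39/16)) as [Hh27|Hl27].
{
  apply (c2_iv c w L (11953/5000) (39/16) (435771/500000) (35639/40000) (1480601/500000) (121289/40000) (1085593/1000000) (1109299/1000000) (197747/125000)); try lra.
  - apply (ln_ge_of (11953/5000) (435771/500000) (418306023/1000000000)); [lra|lra|(cbv [P coef]; simpl INR; lra)|lra].
  - apply ln_le_of; [lra|lra|(cbv [P coef]; simpl INR; lra)].
  - apply (ln_ge_of (1480601/500000) (1085593/1000000) (337701469/1000000000)); [lra|lra|(cbv [P coef]; simpl INR; lra)|lra].
  - apply ln_le_of; [lra|lra|(cbv [P coef]; simpl INR; lra)].
}
destruct (Rle_lt_dec w (6211/2500)) as [Hh28|Hl28].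
{
  apply (c2_iv c w L (39/16) (6211/2500) (89097/100000) (455017/500000) (151611/50000) (1551437/500000) (1109293/1000000) (1132331/1000000) (197747/125000)); try lra.
  - apply (ln_ge_of (39/16) (89097/100000) (410257609/1000000000)); [lra|lra|(cbv [P coef]; simpl INR; lra)|lra].
  - apply ln_le_of; [lra|lra|(cbv [P coef]; simpl INR; lra)].
  - apply (ln_ge_of (151611/50000) (1109293/1000000) (329792041/1000000000)); [lra|lra|(cbv [P coef]; simpl INR; lra)|lra].
  - apply ln_le_of; [lra|lra|(cbv [P coef]; simpl INR; lra)].
}
destruct (Rle_lt_dec w (1582/625)) as [Hh29|Hl29].
{
  apply (c2_iv c w L (6211/2500) (1582/625) (910029/1000000) (116087/125000) (3102869/1000000) (396627/125000) (45293/40000) (230937/200000) (197747/125000)); try lra.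
  - apply (ln_ge_of (6211/2500) (910029/1000000) (8050251/20000000)); [lra|lra|(cbv [P coef]; simpl INR; lra)|lra].
  - apply ln_le_of; [lra|lra|(cbv [P coef]; simpl INR; lra)].
  - apply (ln_ge_of (3102869/1000000) (45293/40000) (80570769/250000000)); [lra|lra|(cbv [P coef]; simpl INR; lra)|lra].
  - apply ln_le_of; [lra|lra|(cbv [P coef]; simpl INR; lra)].
}
destruct (Rle_lt_dec w (25781/10000)) as [Hh30|Hl30].
{
  apply (c2_iv c w L (1582/625) (25781/10000) (928691/1000000) (189411/200000) (3173011/1000000) (648593/200000) (577339/500000) (1176491/1000000) (197747/125000)); try lra.
  - apply (ln_ge_of (1582/625) (928691/1000000) (395070519/1000000000)); [lra|lra|(cbv [P coef]; simpl INR; lra)|lra].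
  - apply ln_le_of; [lra|lra|(cbv [P coef]; simpl INR; lra)].
  - apply (ln_ge_of (3173011/1000000) (577339/500000) (315159001/1000000000)); [lra|lra|(cbv [P coef]; simpl INR; lra)|lra].
  - apply ln_le_of; [lra|lra|(cbv [P coef]; simpl INR; lra)].
}
destruct (Rle_lt_dec w (21/8)) as [Hh31|Hl31].
{
  apply (c2_iv c w L (25781/10000) (21/8) (18941/20000) (965083/1000000) (40537/12500) (3312583/1000000) (294121/250000) (1197731/1000000) (197747/125000)); try lra.
  - apply (ln_ge_of (25781/10000) (18941/20000) (387883593/1000000000)); [lra|lra|(cbv [P coef]; simpl INR; lra)|lra].
  - apply ln_le_of; [lra|lra|(cbv [P coef]; simpl INR; lra)].
  - apply (ln_ge_of (40537/12500) (294121/250000) (38545129/125000000)); [lra|lra|(cbv [P coef]; simpl INR; lra)|lra].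
  - apply ln_le_of; [lra|lra|(cbv [P coef]; simpl INR; lra)].
}
destruct (Rle_lt_dec w (26719/10000)) as [Hh32|Hl32].
{
  apply (c2_iv c w L (21/8) (26719/10000) (482539/500000) (122849/125000) (1656289/500000) (1690941/500000) (299431/250000) (243687/200000) (197747/125000)); try lra.
  - apply (ln_ge_of (21/8) (482539/500000) (95238371/250000000)); [lra|lra|(cbv [P coef]; simpl INR; lra)|lra].
  - apply ln_le_of; [lra|lra|(cbv [P coef]; simpl INR; lra)].
  - apply (ln_ge_of (1656289/500000) (299431/250000) (30188051/100000000)); [lra|lra|(cbv [P coef]; simpl INR; lra)|lra].
  - apply ln_le_of; [lra|lra|(cbv [P coef]; simpl INR; lra)].
}
destruct (Rle_lt_dec w (6797/2500)) as [Hh33|Hl33].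
{
  apply (c2_iv c w L (26719/10000) (6797/2500) (982787/1000000) (1000193/1000000) (3381877/1000000) (3450873/1000000) (304607/250000) (123863/100000) (197747/125000)); try lra.
  - apply (ln_ge_of (26719/10000) (982787/1000000) (374266563/1000000000)); [lra|lra|(cbv [P coef]; simpl INR; lra)|lra].
  - apply ln_le_of; [lra|lra|(cbv [P coef]; simpl INR; lra)].
  - apply (ln_ge_of (3381877/1000000) (304607/250000) (295694633/1000000000)); [lra|lra|(cbv [P coef]; simpl INR; lra)|lra].
  - apply ln_le_of; [lra|lra|(cbv [P coef]; simpl INR; lra)].
}
destruct (Rle_lt_dec w (3457/1250)) as [Hh34|Hl34].
{
  apply (c2_iv c w L (6797/2500) (3457/1250) (250047/250000) (50863/50000) (862717/250000) (175971/50000) (1238623/1000000) (1258299/1000000) (197747/125000)); try lra.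
  - apply (ln_ge_of (6797/2500) (250047/250000) (183905143/500000000)); [lra|lra|(cbv [P coef]; simpl INR; lra)|lra].
  - apply ln_le_of; [lra|lra|(cbv [P coef]; simpl INR; lra)].
  - apply (ln_ge_of (862717/250000) (1238623/1000000) (144891487/500000000)); [lra|lra|(cbv [P coef]; simpl INR; lra)|lra].
  - apply ln_le_of; [lra|lra|(cbv [P coef]; simpl INR; lra)].
}
destruct (Rle_lt_dec w (45/16)) as [Hh35|Hl35].
{
  apply (c2_iv c w L (3457/1250) (45/16) (203451/200000) (258519/250000) (703883/200000) (1793913/500000) (314573/250000) (1277549/1000000) (197747/125000)); try lra.
  - apply (ln_ge_of (3457/1250) (203451/200000) (361586133/1000000000)); [lra|lra|(cbv [P coef]; simpl INR; lra)|lra].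
  - apply ln_le_of; [lra|lra|(cbv [P coef]; simpl INR; lra)].
  - apply (ln_ge_of (703883/200000) (314573/250000) (284138921/1000000000)); [lra|lra|(cbv [P coef]; simpl INR; lra)|lra].
  - apply ln_le_of; [lra|lra|(cbv [P coef]; simpl INR; lra)].
}
destruct (Rle_lt_dec w (14297/5000)) as [Hh36|Hl36].
{
  apply (c2_iv c w L (45/16) (14297/5000) (1034071/1000000) (525307/500000) (3587821/1000000) (1827977/500000) (1277543/1000000) (32409/25000) (197747/125000)); try lra.
  - apply (ln_ge_of (45/16) (1034071/1000000) (355556539/1000000000)); [lra|lra|(cbv [P coef]; simpl INR; lra)|lra].
  - apply ln_le_of; [lra|lra|(cbv [P coef]; simpl INR; lra)].
  - apply (ln_ge_of (3587821/1000000) (1277543/1000000) (278721277/1000000000)); [lra|lra|(cbv [P coef]; simpl INR; lra)|lra].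
  - apply ln_le_of; [lra|lra|(cbv [P coef]; simpl INR; lra)].
}
destruct (Rle_lt_dec w (14531/5000)) as [Hh37|Hl37].
{
  apply (c2_iv c w L (14297/5000) (14531/5000) (1050609/1000000) (1066849/1000000) (3655949/1000000) (3723669/1000000) (1296353/1000000) (164339/125000) (197747/125000)); try lra.
  - apply (ln_ge_of (14297/5000) (1050609/1000000) (349724701/1000000000)); [lra|lra|(cbv [P coef]; simpl INR; lra)|lra].
  - apply ln_le_of; [lra|lra|(cbv [P coef]; simpl INR; lra)].
  - apply (ln_ge_of (3655949/1000000) (1296353/1000000) (27352753/100000000)); [lra|lra|(cbv [P coef]; simpl INR; lra)|lra].
  - apply ln_le_of; [lra|lra|(cbv [P coef]; simpl INR; lra)].
}
destruct (Rle_lt_dec w (3)) as [Hh38|Hl38].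
{
  apply (c2_iv c w L (14531/5000) (3) (266711/250000) (219723/200000) (232729/62500) (771723/200000) (657353/500000) (1350311/1000000) (197747/125000)); try lra.
  - apply (ln_ge_of (14531/5000) (266711/250000) (172046381/500000000)); [lra|lra|(cbv [P coef]; simpl INR; lra)|lra].
  - apply ln_le_of; [lra|lra|(cbv [P coef]; simpl INR; lra)].
  - apply (ln_ge_of (232729/62500) (657353/500000) (53710653/200000000)); [lra|lra|(cbv [P coef]; simpl INR; lra)|lra].
  - apply ln_le_of; [lra|lra|(cbv [P coef]; simpl INR; lra)].
}
destruct (Rle_lt_dec w (123/40)) as [Hh39|Hl39].
{
  apply (c2_iv c w L (3) (123/40) (109861/100000) (1123307/1000000) (385861/100000) (3965807/1000000) (270061/200000) (86107/62500) (197747/125000)); try lra.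
  - apply (ln_ge_of (3) (109861/100000) (20833381/62500000)); [lra|lra|(cbv [P coef]; simpl INR; lra)|lra].
  - apply ln_le_of; [lra|lra|(cbv [P coef]; simpl INR; lra)].
  - apply (ln_ge_of (385861/100000) (270061/200000) (259161203/1000000000)); [lra|lra|(cbv [P coef]; simpl INR; lra)|lra].
  - apply ln_le_of; [lra|lra|(cbv [P coef]; simpl INR; lra)].
}
destruct (Rle_lt_dec w (63/20)) as [Hh40|Hl40].
{
  apply (c2_iv c w L (123/40) (63/20) (561651/500000) (229481/200000) (1982901/500000) (814481/200000) (688853/500000) (351059/250000) (197747/125000)); try lra.
  - apply (ln_ge_of (123/40) (561651/500000) (65040839/200000000)); [lra|lra|(cbv [P coef]; simpl INR; lra)|lra].
  - apply ln_le_of; [lra|lra|(cbv [P coef]; simpl INR; lra)].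
  - apply (ln_ge_of (1982901/500000) (688853/500000) (50431267/200000000)); [lra|lra|(cbv [P coef]; simpl INR; lra)|lra].
  - apply ln_le_of; [lra|lra|(cbv [P coef]; simpl INR; lra)].
}
destruct (Rle_lt_dec w (129/40)) as [Hh41|Hl41].
{
  apply (c2_iv c w L (63/20) (129/40) (5737/5000) (234187/200000) (10181/2500) (835687/200000) (140423/100000) (1429939/1000000) (197747/125000)); try lra.
  - apply (ln_ge_of (63/20) (5737/5000) (39682637/125000000)); [lra|lra|(cbv [P coef]; simpl INR; lra)|lra].
  - apply ln_le_of; [lra|lra|(cbv [P coef]; simpl INR; lra)].
  - apply (ln_ge_of (10181/2500) (140423/100000) (12277803/50000000)); [lra|lra|(cbv [P coef]; simpl INR; lra)|lra].
  - apply ln_le_of; [lra|lra|(cbv [P coef]; simpl INR; lra)].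
}
destruct (Rle_lt_dec w (33/10)) as [Hh42|Hl42].
{
  apply (c2_iv c w L (129/40) (33/10) (117093/100000) (47757/40000) (417843/100000) (171357/40000) (1429933/1000000) (181859/125000) (197747/125000)); try lra.
  - apply (ln_ge_of (129/40) (117093/100000) (155039217/500000000)); [lra|lra|(cbv [P coef]; simpl INR; lra)|lra].
  - apply ln_le_of; [lra|lra|(cbv [P coef]; simpl INR; lra)].
  - apply (ln_ge_of (417843/100000) (1429933/1000000) (119662477/500000000)); [lra|lra|(cbv [P coef]; simpl INR; lra)|lra].
  - apply ln_le_of; [lra|lra|(cbv [P coef]; simpl INR; lra)].
}
destruct (Rle_lt_dec w (27/8)) as [Hh43|Hl43].
{
  apply (c2_iv c w L (33/10) (27/8) (3731/3125) (608199/500000) (53549/12500) (2194449/500000) (727433/500000) (1479081/1000000) (197747/125000)); try lra.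
  - apply (ln_ge_of (33/10) (3731/3125) (6060621/20000000)); [lra|lra|(cbv [P coef]; simpl INR; lra)|lra].
  - apply ln_le_of; [lra|lra|(cbv [P coef]; simpl INR; lra)].
  - apply (ln_ge_of (53549/12500) (727433/500000) (233431639/1000000000)); [lra|lra|(cbv [P coef]; simpl INR; lra)|lra].
  - apply ln_le_of; [lra|lra|(cbv [P coef]; simpl INR; lra)].
}
destruct (Rle_lt_dec w (69/20)) as [Hh44|Hl44].
{
  apply (c2_iv c w L (27/8) (69/20) (1216393/1000000) (1238377/1000000) (4388893/1000000) (4493377/1000000) (59163/40000) (1502607/1000000) (197747/125000)); try lra.
  - apply (ln_ge_of (27/8) (1216393/1000000) (37037123/125000000)); [lra|lra|(cbv [P coef]; simpl INR; lra)|lra].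
  - apply ln_le_of; [lra|lra|(cbv [P coef]; simpl INR; lra)].
  - apply (ln_ge_of (4388893/1000000) (59163/40000) (56962087/250000000)); [lra|lra|(cbv [P coef]; simpl INR; lra)|lra].
  - apply ln_le_of; [lra|lra|(cbv [P coef]; simpl INR; lra)].
}
destruct (Rle_lt_dec w (141/40)) as [Hh45|Hl45].
{
  apply (c2_iv c w L (69/20) (141/40) (309593/250000) (1259883/1000000) (1123343/250000) (4597383/1000000) (1502601/1000000) (152549/100000) (197747/125000)); try lra.
  - apply (ln_ge_of (69/20) (309593/250000) (144927859/500000000)); [lra|lra|(cbv [P coef]; simpl INR; lra)|lra].
  - apply ln_le_of; [lra|lra|(cbv [P coef]; simpl INR; lra)].
  - apply (ln_ge_of (1123343/250000) (1502601/1000000) (222550549/1000000000)); [lra|lra|(cbv [P coef]; simpl INR; lra)|lra].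
  - apply ln_le_of; [lra|lra|(cbv [P coef]; simpl INR; lra)].
}
destruct (Rle_lt_dec w (18/5)) as [Hh46|Hl46].
{
  apply (c2_iv c w L (141/40) (18/5) (629939/500000) (160117/125000) (2298689/500000) (587617/125000) (381371/250000) (386941/250000) (197747/125000)); try lra.
  - apply (ln_ge_of (141/40) (629939/500000) (141844317/500000000)); [lra|lra|(cbv [P coef]; simpl INR; lra)|lra].
  - apply ln_le_of; [lra|lra|(cbv [P coef]; simpl INR; lra)].
  - apply (ln_ge_of (2298689/500000) (381371/250000) (217515749/1000000000)); [lra|lra|(cbv [P coef]; simpl INR; lra)|lra].
  - apply ln_le_of; [lra|lra|(cbv [P coef]; simpl INR; lra)].
}
destruct (Rle_lt_dec w (15/4)) as [Hh47|Hl47].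
{
  apply (c2_iv c w L (18/5) (15/4) (1280931/1000000) (660879/500000) (4700931/1000000) (2453379/500000) (773879/500000) (198827/125000) (197747/125000)); try lra.
  - apply (ln_ge_of (18/5) (1280931/1000000) (277778567/1000000000)); [lra|lra|(cbv [P coef]; simpl INR; lra)|lra].
  - apply ln_le_of; [lra|lra|(cbv [P coef]; simpl INR; lra)].
  - apply (ln_ge_of (4700931/1000000) (773879/500000) (106362181/500000000)); [lra|lra|(cbv [P coef]; simpl INR; lra)|lra].
  - apply ln_le_of; [lra|lra|(cbv [P coef]; simpl INR; lra)].
}
destruct (Rle_lt_dec w (39/10)) as [Hh48|Hl48].
{
  apply (c2_iv c w L (15/4) (39/10) (1321753/1000000) (1360979/1000000) (4906753/1000000) (5110979/1000000) (159061/100000) (1631393/1000000) (197747/125000)); try lra.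
  - apply (ln_ge_of (15/4) (1321753/1000000) (266667423/1000000000)); [lra|lra|(cbv [P coef]; simpl INR; lra)|lra].
  - apply ln_le_of; [lra|lra|(cbv [P coef]; simpl INR; lra)].
  - apply (ln_ge_of (4906753/1000000) (159061/100000) (6368789/31250000)); [lra|lra|(cbv [P coef]; simpl INR; lra)|lra].
  - apply ln_le_of; [lra|lra|(cbv [P coef]; simpl INR; lra)].
}
destruct (Rle_lt_dec w (81/20)) as [Hh49|Hl49].
{
  apply (c2_iv c w L (39/10) (81/20) (680487/500000) (1398719/1000000) (2555487/500000) (5313719/1000000) (1631387/1000000) (835147/500000) (197747/125000)); try lra.
  - apply (ln_ge_of (39/10) (680487/500000) (25641091/100000000)); [lra|lra|(cbv [P coef]; simpl INR; lra)|lra].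
  - apply ln_le_of; [lra|lra|(cbv [P coef]; simpl INR; lra)].
  - apply (ln_ge_of (2555487/500000) (1631387/1000000) (97828999/500000000)); [lra|lra|(cbv [P coef]; simpl INR; lra)|lra].
  - apply ln_le_of; [lra|lra|(cbv [P coef]; simpl INR; lra)].
}
destruct (Rle_lt_dec w (21/5)) as [Hh50|Hl50].
{
  apply (c2_iv c w L (81/20) (21/5) (699357/500000) (1435087/1000000) (2656857/500000) (5515087/1000000) (1670289/1000000) (170749/100000) (197747/125000)); try lra.
  - apply (ln_ge_of (81/20) (699357/500000) (24691429/100000000)); [lra|lra|(cbv [P coef]; simpl INR; lra)|lra].
  - apply ln_le_of; [lra|lra|(cbv [P coef]; simpl INR; lra)].
  - apply (ln_ge_of (2656857/500000) (1670289/1000000) (11762041/62500000)); [lra|lra|(cbv [P coef]; simpl INR; lra)|lra].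
  - apply ln_le_of; [lra|lra|(cbv [P coef]; simpl INR; lra)].
}
destruct (Rle_lt_dec w (87/20)) as [Hh51|Hl51].
{
  apply (c2_iv c w L (21/5) (87/20) (717541/500000) (735089/500000) (2757541/500000) (2857589/500000) (426871/250000) (217891/125000) (197747/125000)); try lra.
  - apply (ln_ge_of (21/5) (717541/500000) (238095837/1000000000)); [lra|lra|(cbv [P coef]; simpl INR; lra)|lra].
  - apply ln_le_of; [lra|lra|(cbv [P coef]; simpl INR; lra)].
  - apply (ln_ge_of (2757541/500000) (426871/250000) (36264281/200000000)); [lra|lra|(cbv [P coef]; simpl INR; lra)|lra].
  - apply ln_le_of; [lra|lra|(cbv [P coef]; simpl INR; lra)].
}
destruct (Rle_lt_dec w (9/2)) as [Hh52|Hl52].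
{
  apply (c2_iv c w L (87/20) (9/2) (1470173/1000000) (18801/12500) (5715173/1000000) (36963/6250) (871561/500000) (888669/500000) (197747/125000)); try lra.
  - apply (ln_ge_of (87/20) (1470173/1000000) (229885709/1000000000)); [lra|lra|(cbv [P coef]; simpl INR; lra)|lra].
  - apply ln_le_of; [lra|lra|(cbv [P coef]; simpl INR; lra)].
  - apply (ln_ge_of (5715173/1000000) (871561/500000) (34994651/200000000)); [lra|lra|(cbv [P coef]; simpl INR; lra)|lra].
  - apply ln_le_of; [lra|lra|(cbv [P coef]; simpl INR; lra)].
}
destruct (Rle_lt_dec w (24/5)) as [Hh53|Hl53].
{
  apply (c2_iv c w L (9/2) (24/5) (60163/40000) (784309/500000) (236563/40000) (3154309/500000) (1777333/1000000) (1841919/1000000) (197747/125000)); try lra.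
  - apply (ln_ge_of (9/2) (60163/40000) (222222751/1000000000)); [lra|lra|(cbv [P coef]; simpl INR; lra)|lra].
  - apply ln_le_of; [lra|lra|(cbv [P coef]; simpl INR; lra)].
  - apply (ln_ge_of (236563/40000) (1777333/1000000) (169088473/1000000000)); [lra|lra|(cbv [P coef]; simpl INR; lra)|lra].
  - apply ln_le_of; [lra|lra|(cbv [P coef]; simpl INR; lra)].
}
destruct (Rle_lt_dec w (51/10)) as [Hh54|Hl54].
{
  apply (c2_iv c w L (24/5) (51/10) (1568613/1000000) (1629243/1000000) (6308613/1000000) (6699243/1000000) (1841913/1000000) (1901997/1000000) (197747/125000)); try lra.
  - apply (ln_ge_of (24/5) (1568613/1000000) (41666787/200000000)); [lra|lra|(cbv [P coef]; simpl INR; lra)|lra].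
  - apply ln_le_of; [lra|lra|(cbv [P coef]; simpl INR; lra)].
  - apply (ln_ge_of (6308613/1000000) (1841913/1000000) (31702769/200000000)); [lra|lra|(cbv [P coef]; simpl INR; lra)|lra].
  - apply ln_le_of; [lra|lra|(cbv [P coef]; simpl INR; lra)].
}
{
  apply (c2_iv c w L (51/10) (27/5) (814619/500000) (1686401/1000000) (3349619/500000) (7086401/1000000) (1901991/1000000) (97909/50000) (197747/125000)); try lra.
  - apply (ln_ge_of (51/10) (814619/500000) (196078919/1000000000)); [lra|lra|(cbv [P coef]; simpl INR; lra)|lra].
  - apply ln_le_of; [lra|lra|(cbv [P coef]; simpl INR; lra)].
  - apply (ln_ge_of (3349619/500000) (1901991/1000000) (149271041/1000000000)); [lra|lra|(cbv [P coef]; simpl INR; lra)|lra].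
  - apply ln_le_of; [lra|lra|(cbv [P coef]; simpl INR; lra)].
}
Qed.


Lemma exp1_hi : exp 1 <= 1359141/500000.
Proof.
  assert (e1 := expm_lo 1 ltac:(lra)). assert (e2 : P 13 (Ropp 1) >= 367879441/1000000000) by (cbv [P coef]; simpl INR; lra).
  assert (e3 : exp 1 * exp (Ropp 1) = 1) by (rewrite <- exp_plus; replace (1 + Ropp 1) with 0 by ring; apply exp_0).
  assert (0 < exp 1) by apply exp_pos.
  assert (e4 : exp 1 * (367879441/1000000000) <= 1) by (apply Rle_trans with (exp 1 * exp (Ropp 1)); [apply Rmult_le_compat_l; lra | lra]).
  lra.
Qed.

Lemma exp1_lo : 2718281/1000000 <= exp 1.
Proof. assert (h := exp_lo 1 ltac:(lra)). assert (P 13 1 >= 2718281/1000000) by (cbv [P coef]; simpl INR; lra). lra. Qed.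

Lemma ln_sqrt_half q : 0 < q -> ln (sqrt q) = ln q / 2.
Proof.
  intros hq. assert (hs : 0 < sqrt q) by (apply sqrt_lt_R0; auto).
  assert (h : ln (sqrt q * sqrt q) = ln q) by (rewrite sqrt_sqrt; lra).
  rewrite ln_mult in h by auto. lra.
Qed.

Theorem proposition3 (nu B z : R) :
  1 <= nu ->
  0 < B -> B <= 2 * sqrt (PI / (2 * exp 1)) ->
  0 < z ->
  let x0 := Rpower 2 (2 * nu - 1) * PI / B ^ 2 in
  2 * z >= ln x0 - ln (ln x0)
           + exp 1 / (exp 1 - 1) * (ln (ln x0) / ln x0) ->
  z >= Rmax (2 / exp 1 * nu) (nu / 2 + 1 / 4) ->
  BesselK nu z < B.
Proof.
  intros hnu hB hBmax hz x0 hW0 hmax.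
  assert (hm1 : 2 / exp 1 * nu <= z) by (generalize (Rmax_l (2 / exp 1 * nu) (nu / 2 + 1 / 4)); lra).
  assert (hm2 : nu / 2 + 1 / 4 <= z) by (generalize (Rmax_r (2 / exp 1 * nu) (nu / 2 + 1 / 4)); lra).
  assert (HK : BesselK nu z <= Ubound nu z).
  { unfold BesselK. change (fun t => exp (- z * cosh t) * cosh (nu * t)) with (fK nu z).
    apply RInt_gen_le_bound. apply fK_cont. intros; apply fK_pos. intros b hb; apply bound_partial; lra. }
  apply Rle_lt_trans with (1 := HK).
  assert (eh := exp1_hi). assert (el := exp1_lo).
  assert (hpi := PI_lo).
  set (L := ln x0).
  assert (hR : Rpower 2 (2 * nu - 1) = exp ((2 * nu - 1) * ln 2)) by reflexivity.
  assert (hR2 : 2 <= Rpower 2 (2 * nu - 1)).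
  { rewrite <- (Rpower_1 2) at 1 by lra. apply Rle_Rpower; lra. }
  assert (hB2 : B ^ 2 <= 2 * PI / exp 1).
  { assert (hs : 0 <= PI / (2 * exp 1)) by (apply Rlt_le, Rdiv_lt_0_compat; lra).
    assert (B ^ 2 <= (2 * sqrt (PI / (2 * exp 1))) ^ 2) by (apply pow_incr; lra).
    replace ((2 * sqrt (PI / (2 * exp 1))) ^ 2) with (4 * (sqrt (PI / (2 * exp 1)) * sqrt (PI / (2 * exp 1)))) in H by ring.
    rewrite sqrt_sqrt in H by auto.
    replace (4 * (PI / (2 * exp 1))) with (2 * PI / exp 1) in H by (field; lra). auto. }
  assert (hB20 : 0 < B ^ 2) by (apply pow_lt; lra).
  assert (hx0 : exp 1 <= x0).
  { unfold x0. apply Rcomplements.Rle_div_r; auto.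
    assert (exp 1 * B ^ 2 <= 2 * PI) by (apply Rcomplements.Rle_div_r in hB2; lra).
    nra. }
  assert (hL1 : 1 <= L) by (unfold L; rewrite <- (ln_exp 1); apply ln_le_mono; [apply exp_pos | auto]).
  assert (hLdef : L = (2 * nu - 1) * ln 2 + ln PI - 2 * ln B).
  { unfold L, x0. rewrite hR. unfold Rdiv.
    rewrite ln_mult; [| apply Rmult_lt_0_compat; [apply exp_pos|lra] | apply Rinv_0_lt_compat; auto].
    rewrite ln_mult; [| apply exp_pos | lra]. rewrite ln_Rinv by auto. rewrite ln_exp.
    replace (B ^ 2) with (B * B) by ring. rewrite ln_mult by auto. ring. }
  set (c := exp 1 / (exp 1 - 1)).
  assert (hc : 1581976/1000000 <= c <= 8/5).
  { unfold c. assert (0 < exp 1 - 1) by lra. split.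
    - apply (proj1 (Rcomplements.Rle_div_r (1581976/1000000) (exp 1) (exp 1 - 1) ltac:(lra))). lra.
    - apply (proj2 (Rcomplements.Rle_div_l (exp 1) (8/5) (exp 1 - 1) ltac:(lra))). lra. }
  assert (hWL : hW c L <= 2 * z).
  { unfold hW, c, L. lra. }
  assert (HC2a : L <= 2 * z + ln (2 * z)) by (apply (c2_all c); lra).
  assert (HC2b : 2 * z <= 54/10 -> L <= 2 * z + ln (2 * z) - (54/100 - 1/10 * (2 * z))).
  { intros hw. apply (C2 c); lra. }
  assert (Hln2z : ln (2 * z) = ln 2 + ln z) by (apply ln_mult; lra).
  assert (HC3 := C3 nu z hnu hz hm2 hm1). cbv zeta in HC3.
  set (a := arcsinh (nu / z)) in *.
  set (C := cosh a) in *.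
  assert (hC : 1 <= C) by apply cosh_ge1.
  assert (hsC : 0 < sqrt C) by (apply sqrt_lt_R0; lra).
  assert (hq : 0 < 4 * z / 3) by lra.
  assert (hsq : 0 < sqrt (4 * z / 3)) by (apply sqrt_lt_R0; lra).
  assert (HU : Ubound nu z = 3 / 4 * exp (- gg nu z a) * (/ sqrt (4 * z / 3) * (1 + / sqrt C))).
  { unfold Ubound. fold a. fold C.
    replace (4 * z * C / 3) with (4 * z / 3 * C) by (field).
    rewrite sqrt_mult by lra. field. split; lra. }
  rewrite HU.
  assert (hpos1 : 0 < / sqrt (4 * z / 3)) by (apply Rinv_0_lt_compat; auto).
  assert (hpos2 : 0 < 1 + / sqrt C) by (assert (0 < / sqrt C) by (apply Rinv_0_lt_compat; auto); lra).
  assert (hE := exp_pos (- gg nu z a)).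
  apply ln_lt_inv; [apply Rmult_lt_0_compat; [apply Rmult_lt_0_compat; lra | apply Rmult_lt_0_compat; lra] | auto |].
  rewrite ln_mult by (try (apply Rmult_lt_0_compat); lra).
  rewrite ln_mult by lra.
  rewrite ln_exp.
  rewrite ln_mult by lra.
  rewrite ln_Rinv by auto. rewrite ln_sqrt_half by lra.
  assert (h34 : ln (3 / 4) = ln 3 - 2 * ln 2).
  { unfold Rdiv. rewrite ln_mult by lra. rewrite ln_Rinv by lra.
    replace 4 with (2 * 2) by ring. rewrite ln_mult by lra. ring. }
  assert (h43 : ln (4 * z / 3) = 2 * ln 2 + ln z - ln 3).
  { unfold Rdiv. rewrite ln_mult by (try apply Rinv_0_lt_compat; lra). rewrite ln_mult by lra.
    rewrite ln_Rinv by lra. replace 4 with (2 * 2) by ring. rewrite ln_mult by lra. ring. }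
  rewrite h34, h43.
  unfold gg. fold C.
  destruct HC3 as [HD|HD].
  - lra.
  - destruct (Rle_or_lt (2 * z) (54/10)) as [hw|hw].
    + specialize (HC2b hw). lra.
    + lra.
Qed.
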